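(* Let $A$ be a complex semisimple Banach algebra with a unit. Then $\mathrm{Soc}(A)$ is infinite-dimensional if and only if every element of $\mathrm{Soc}(A)$ is a topological divisor of zero in the normed algebra $\mathrm{Soc}(A)$ (with the norm inherited from $A$). *)

(* Defs.v *)
From Stdlib Require Import Reals.
Open Scope R_scope.

Definition C : Type := (R * R)%type.
Definition C0 : C := (0, 0).
Definition C1 : C := (1, 0).
Definition Cadd (a b : C) : C := (fst a + fst b, snd a + snd b).
Definition Cmul (a b : C) : C :=
  (fst a * fst b - snd a * snd b, fst a * snd b + snd a * fst b).
Definition Cabs (a : C) : R := sqrt (fst a * fst a + snd a * snd a).

Record CBanachAlgebra := {
  car :> Type;
  add : car -> car -> car;
  opp : car -> car;
  zero : car;
  mul : car -> car -> car;
  one : car;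
  scal : C -> car -> car;
  norm : car -> R;
  add_assoc : forall x y z, add x (add y z) = add (add x y) z;
  add_comm : forall x y, add x y = add y x;
  add_zero : forall x, add x zero = x;
  add_opp : forall x, add x (opp x) = zero;
  scal_assoc : forall a b x, scal a (scal b x) = scal (Cmul a b) x;
  scal_one : forall x, scal C1 x = x;
  scal_add_vec : forall a x y, scal a (add x y) = add (scal a x) (scal a y);
  scal_add_scal : forall a b x, scal (Cadd a b) x = add (scal a x) (scal b x);
  mul_assoc : forall x y z, mul x (mul y z) = mul (mul x y) z;
  mul_one_l : forall x, mul one x = x;
  mul_one_r : forall x, mul x one = x;
  mul_add_l : forall x y z, mul (add x y) z = add (mul x z) (mul y z);
  mul_add_r : forall x y z, mul x (add y z) = add (mul x y) (mul x z);
  mul_scal_l : forall a x y, mul (scal a x) y = scal a (mul x y);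
  mul_scal_r : forall a x y, mul x (scal a y) = scal a (mul x y);
  norm_eq0 : forall x, norm x = 0 <-> x = zero;
  norm_triangle : forall x y, norm (add x y) <= norm x + norm y;
  norm_scal : forall a x, norm (scal a x) = Cabs a * norm x;
  norm_mul : forall x y, norm (mul x y) <= norm x * norm y;
  complete : forall u : nat -> car,
    (forall eps, eps > 0 -> exists N, forall m n, (m >= N)%nat -> (n >= N)%nat ->
        norm (add (u m) (opp (u n))) < eps) ->
    exists l, Un_cv (fun n => norm (add (u n) (opp l))) 0
}.

Arguments add {c}. Arguments opp {c}. Arguments zero {c}. Arguments mul {c}.
Arguments one {c}. Arguments scal {c}. Arguments norm {c}.

Section Algebra.
Variable A : CBanachAlgebra.

Fixpoint vsum (v : nat -> A) (n : nat) : A :=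
  match n with
  | O => zero
  | S k => add (vsum v k) (v k)
  end.

Definition left_ideal (I : A -> Prop) : Prop :=
  I zero /\
  (forall x y, I x -> I y -> I (add x y)) /\
  (forall a x, I x -> I (scal a x)) /\
  (forall a x, I x -> I (mul a x)).

Definition maximal_left_ideal (I : A -> Prop) : Prop :=
  left_ideal I /\ ~ I one /\
  (forall J, left_ideal J -> ~ J one -> (forall x, I x -> J x) -> forall x, J x -> I x).

Definition minimal_left_ideal (L : A -> Prop) : Prop :=
  left_ideal L /\ (exists x, L x /\ x <> zero) /\
  (forall J, left_ideal J -> (forall x, J x -> L x) ->
     (forall x, J x -> x = zero) \/ (forall x, L x -> J x)).

Definition rad (x : A) : Prop := forall I, maximal_left_ideal I -> I x.

Definition semisimple : Prop := forall x, rad x -> x = zero.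

(* socle: sum of all minimal left ideals ({0} if there are none) *)
Definition soc (x : A) : Prop :=
  exists (n : nat) (v : nat -> A),
    (forall i, (i < n)%nat -> exists L, minimal_left_ideal L /\ L (v i)) /\
    x = vsum v n.

Definition finite_dimensional (S : A -> Prop) : Prop :=
  exists (n : nat) (v : nat -> A),
    (forall i, (i < n)%nat -> S (v i)) /\
    (forall x, S x -> exists c : nat -> C, x = vsum (fun i => scal (c i) (v i)) n).

Definition infinite_dimensional (S : A -> Prop) : Prop := ~ finite_dimensional S.

Definition topological_divisor_of_zero_in (S : A -> Prop) (x : A) : Prop :=
  exists z : nat -> A, (forall n, S (z n)) /\ (forall n, norm (z n) = 1) /\
    (Un_cv (fun n => norm (mul x (z n))) 0 \/ Un_cv (fun n => norm (mul (z n) x)) 0).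

End Algebra.

(* Main.v *)
Require Import Defs.
From Stdlib Require Import Reals Lra Lia Classical ClassicalEpsilon FunctionalExtensionality.
From Stdlib Require ZArith.
From Stdlib Require Ncring Ncring_tac.
Require Coquelicot.Complex Coquelicot.Compactness.
Open Scope R_scope.

Arguments add_assoc {c}.
Arguments add_comm {c}.
Arguments add_zero {c}.
Arguments add_opp {c}.
Arguments scal_assoc {c}.
Arguments scal_one {c}.
Arguments scal_add_vec {c}.
Arguments scal_add_scal {c}.
Arguments mul_assoc {c}.
Arguments mul_one_l {c}.
Arguments mul_one_r {c}.
Arguments mul_add_l {c}.
Arguments mul_add_r {c}.
Arguments mul_scal_l {c}.
Arguments mul_scal_r {c}.
Arguments norm_eq0 {c}.
Arguments norm_triangle {c}.
Arguments norm_scal {c}.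
Arguments norm_mul {c}.
Arguments complete {c}.

Section Basic.
Variable A : CBanachAlgebra.
Implicit Types x y z : A.

Lemma add_0l x : add zero x = x.
Proof. rewrite add_comm; apply add_zero. Qed.

Lemma add_opp_l x : add (opp x) x = zero.
Proof. rewrite add_comm; apply add_opp. Qed.

Lemma add_cancel_l z x y : add z x = add z y -> x = y.
Proof.
  intro H. rewrite <- (add_0l x), <- (add_0l y), <- (add_opp_l z),
   <- !add_assoc, H. reflexivity.
Qed.

Lemma opp_unique x y : add x y = zero -> y = opp x.
Proof.
  intro H. apply (add_cancel_l x). rewrite H, add_opp. reflexivity.
Qed.

Lemma opp_opp x : opp (opp x) = x.
Proof. symmetry. apply opp_unique. apply add_opp_l. Qed.

Lemma opp_zero : opp (zero : A) = zero.
Proof. symmetry. apply opp_unique. apply add_zero. Qed.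

Lemma opp_add x y : opp (add x y) = add (opp x) (opp y).
Proof.
  symmetry. apply opp_unique.
  rewrite (add_comm (opp x)), add_assoc, <- (add_assoc x y), add_opp, add_zero, add_opp.
  reflexivity.
Qed.

Lemma sub_eq0 x y : add x (opp y) = zero -> x = y.
Proof.
  intro H. apply opp_unique in H. rewrite <- (opp_opp x), <- (opp_opp y), H. reflexivity.
Qed.

Lemma mul_0l x : mul zero x = zero.
Proof.
  apply (add_cancel_l (mul zero x)). rewrite <- mul_add_l, !add_zero. reflexivity.
Qed.

Lemma mul_0r x : mul x zero = zero.
Proof.
  apply (add_cancel_l (mul x zero)). rewrite <- mul_add_r, !add_zero. reflexivity.
Qed.

Lemma mul_opp_l x y : mul (opp x) y = opp (mul x y).
Proof. apply opp_unique. rewrite <- mul_add_l, add_opp, mul_0l. reflexivity. Qed.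

Lemma mul_opp_r x y : mul x (opp y) = opp (mul x y).
Proof. apply opp_unique. rewrite <- mul_add_r, add_opp, mul_0r. reflexivity. Qed.

Lemma scal_C0 x : scal C0 x = zero.
Proof.
  apply (add_cancel_l (scal C0 x)). rewrite <- scal_add_scal, add_zero.
  f_equal. unfold Cadd, C0; simpl. f_equal; ring.
Qed.

Lemma scal_zero c : scal c (zero : A) = zero.
Proof.
  apply (add_cancel_l (scal c zero)). rewrite <- scal_add_vec, !add_zero. reflexivity.
Qed.

Lemma scal_m1 x : scal (-1, 0) x = opp x.
Proof.
  apply opp_unique. rewrite <- (scal_one x) at 1. rewrite <- scal_add_scal.
  replace (Cadd Defs.C1 (-1, 0)) with C0. apply scal_C0.
  unfold Cadd, Defs.C1, C0; simpl. f_equal; ring.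
Qed.

Lemma scal_opp c x : scal c (opp x) = opp (scal c x).
Proof.
  apply opp_unique. rewrite <- scal_add_vec, add_opp. apply scal_zero.
Qed.

Lemma opp_scal c x : opp (scal c x) = scal (Cmul (-1,0) c) x.
Proof. rewrite <- scal_assoc, scal_m1. reflexivity. Qed.

Lemma norm_zero : norm (zero : A) = 0.
Proof. apply norm_eq0; reflexivity. Qed.

Lemma Cabs_m1 : Cabs (-1, 0) = 1.
Proof. unfold Cabs; simpl. replace (-1 * -1 + 0 * 0) with 1 by ring. apply sqrt_1. Qed.

Lemma norm_opp x : norm (opp x) = norm x.
Proof. rewrite <- scal_m1, norm_scal, Cabs_m1. ring. Qed.

Lemma norm_nonneg x : 0 <= norm x.
Proof.
  pose proof (norm_triangle x (opp x)). rewrite add_opp, norm_zero, norm_opp in H. lra.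
Qed.

Lemma norm_sub_sym x y : norm (add x (opp y)) = norm (add y (opp x)).
Proof.
  rewrite <- norm_opp, opp_add, opp_opp, add_comm. reflexivity.
Qed.

Lemma norm_pos x : x <> zero -> 0 < norm x.
Proof.
  intro H. destruct (norm_nonneg x) as [h|h]; auto. symmetry in h. apply norm_eq0 in h. tauto.
Qed.

Lemma mul_sub_l x y z : mul (add x (opp y)) z = add (mul x z) (opp (mul y z)).
Proof. rewrite mul_add_l, mul_opp_l. reflexivity. Qed.
Lemma mul_sub_r x y z : mul z (add x (opp y)) = add (mul z x) (opp (mul z y)).
Proof. rewrite mul_add_r, mul_opp_r. reflexivity. Qed.

End Basic.

#[global] Instance Aops (A : CBanachAlgebra) : @Ncring.Ring_ops (car A) (@Defs.zero A) (@Defs.one A) (@Defs.add A) (@Defs.mul A) (fun x y => Defs.add x (Defs.opp y)) (@Defs.opp A) eq := {}.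
#[global] Instance ARing (A : CBanachAlgebra) : @Ncring.Ring (car A) (@Defs.zero A) (@Defs.one A) (@Defs.add A) (@Defs.mul A) (fun x y => Defs.add x (Defs.opp y)) (@Defs.opp A) eq (Aops A).
Proof.
  constructor; try (exact _); intros; auto.
  apply add_0l. apply add_comm. apply add_assoc. apply mul_one_l. apply mul_one_r. apply mul_assoc.
  apply mul_add_l. apply mul_add_r. reflexivity. apply add_opp.
Qed.

Ltac ncring := Ncring_tac.non_commutative_ring.

Definition semiprime (A : CBanachAlgebra) : Prop :=
  forall u : A, (forall a, mul (mul u a) u = zero) -> u = zero.

Definition MI (A : CBanachAlgebra) (e : A) : Prop :=
  mul e e = e /\ e <> zero /\ minimal_left_ideal A (fun z => mul z e = z).

Section Alg.
Variable A : CBanachAlgebra.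
Implicit Types x y z u e f : A.

Lemma li_zero I : left_ideal A I -> I zero.
Proof. intros [h _]; exact h. Qed.
Lemma li_add I x y : left_ideal A I -> I x -> I y -> I (add x y).
Proof. intros [_ [h _]]; auto. Qed.
Lemma li_scal I c x : left_ideal A I -> I x -> I (scal c x).
Proof. intros [_ [_ [h _]]]; auto. Qed.
Lemma li_mul I a x : left_ideal A I -> I x -> I (mul a x).
Proof. intros [_ [_ [_ h]]]; auto. Qed.
Lemma li_opp I x : left_ideal A I -> I x -> I (opp x).
Proof. intros H Hx. rewrite <- scal_m1. apply li_scal; auto. Qed.
Lemma li_sub I x y : left_ideal A I -> I x -> I y -> I (add x (opp y)).
Proof. intros. apply li_add; auto. apply li_opp; auto. Qed.

Lemma semisimple_SP : semisimple A -> semiprime A.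
Proof.
  intros hA u Hu. apply hA. intros I [HI [HI1 Hmax]].
  destruct (classic (I u)) as [|Hn]; auto. exfalso.
  set (J := fun z => exists i a, I i /\ z = add i (mul a u)).
  assert (hJ : left_ideal A J).
  { split; [|split; [|split]].
    - exists zero, zero. split. apply li_zero; auto. rewrite mul_0l, add_zero; auto.
    - intros x y [i [a [Hi ->]]] [i' [a' [Hi' ->]]]. exists (add i i'), (add a a').
      split. apply li_add; auto. rewrite mul_add_l. ncring.
    - intros c x [i [a [Hi ->]]]. exists (scal c i), (scal c a). split. apply li_scal; auto.
      rewrite scal_add_vec, mul_scal_l. reflexivity.
    - intros b x [i [a [Hi ->]]]. exists (mul b i), (mul b a). split. apply li_mul; auto.
      rewrite mul_add_r, mul_assoc. reflexivity. }
  destruct (classic (J one)) as [Hone|Hnone].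
  - destruct Hone as [i [a [Hi Hone]]].
    assert (Hi' : i = add one (opp (mul a u))).
    { rewrite Hone. ncring. }
    apply HI1.
    assert (E : one = mul (add one (mul a u)) i).
    { rewrite Hi'. transitivity (add one (opp (mul a (mul (mul u a) u)))).
      rewrite Hu, mul_0r, opp_zero, add_zero. reflexivity. ncring. }
    rewrite E. apply li_mul; auto.
  - apply Hn. apply (Hmax J hJ Hnone).
    + intros x Hx. exists x, zero. split; auto. rewrite mul_0l, add_zero; auto.
    + exists zero, one. split. apply li_zero; auto. rewrite mul_one_l, add_0l; auto.
Qed.

Lemma Pe_li e : mul e e = e -> left_ideal A (fun z => mul z e = z).
Proof.
  intro He. split; [|split; [|split]].
  - apply mul_0l.
  - intros x y Hx Hy. rewrite mul_add_l, Hx, Hy; auto.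
  - intros c x Hx. rewrite mul_scal_l, Hx; auto.
  - intros a x Hx. rewrite <- mul_assoc, Hx; auto.
Qed.

Lemma minimal_ext L L' : minimal_left_ideal A L -> (forall x, L x <-> L' x) ->
  minimal_left_ideal A L'.
Proof.
  intros [[h0 [h1 [h2 h3]]] [[y [Hy Hy0]] Hm]] E.
  split; [split; [|split; [|split]]|split].
  - apply E; auto.
  - intros; apply E; apply h1; apply E; auto.
  - intros; apply E; apply h2; apply E; auto.
  - intros; apply E; apply h3; apply E; auto.
  - exists y; split; auto; apply E; auto.
  - intros J hJ HJ. destruct (Hm J hJ) as [H|H].
    + intros x Hx. apply E. apply HJ; auto.
    + left; auto.
    + right. intros x Hx. apply H. apply E; auto.
Qed.

Lemma brauer L y : semiprime A -> minimal_left_ideal A L -> L y ->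
  exists e, MI A e /\ L e /\ (forall l, L l -> mul l e = l).
Proof.
  intros hSP HL Hy. pose proof HL as [hL [[y0 [Hy0 Hy00]] Hm]].
  assert (exists a, mul (mul y0 a) y0 <> zero) as [a Ha].
  { apply NNPP. intro H. apply Hy00. apply hSP. intro a. apply NNPP. intro H'. apply H. eauto. }
  set (m := mul a y0).
  assert (Lm : L m) by (apply li_mul; auto).
  assert (Hym : mul y0 m <> zero) by (unfold m; rewrite mul_assoc; auto).
  clearbody m.
  set (J := fun z => exists l, L l /\ z = mul l m).
  assert (hJ : left_ideal A J).
  { split; [|split; [|split]].
    - exists zero. split. apply li_zero; auto. rewrite mul_0l; auto.
    - intros x y1 [l [Hl ->]] [l' [Hl' ->]]. exists (add l l'). split. apply li_add; auto. rewrite mul_add_l; auto.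
    - intros c x [l [Hl ->]]. exists (scal c l). split. apply li_scal; auto. rewrite mul_scal_l; auto.
    - intros b x [l [Hl ->]]. exists (mul b l). split. apply li_mul; auto. rewrite mul_assoc; auto. }
  destruct (Hm J hJ) as [H|H].
  { intros x [l [Hl ->]]. apply li_mul; auto. }
  { exfalso. apply Hym. apply H. exists y0; auto. }
  destruct (H m Lm) as [e [Le Hem]].
  assert (Hm0 : m <> zero) by (intro E; apply Hym; rewrite E, mul_0r; auto).
  set (K := fun l => L l /\ mul l m = zero).
  assert (hK : left_ideal A K).
  { split; [|split; [|split]].
    - split. apply li_zero; auto. apply mul_0l.
    - intros x y1 [Hx Ex] [Hy1 Ey]. split. apply li_add; auto. rewrite mul_add_l, Ex, Ey, add_zero; auto.
    - intros c x [Hx Ex]. split. apply li_scal; auto. rewrite mul_scal_l, Ex, scal_zero; auto.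
    - intros b x [Hx Ex]. split. apply li_mul; auto. rewrite <- mul_assoc, Ex, mul_0r; auto. }
  assert (Hee : mul e e = e).
  { destruct (Hm K hK) as [H2|H2].
    - intros x [Hx _]; auto.
    - apply sub_eq0. apply H2. split. apply li_sub; auto. apply li_mul; auto.
      rewrite mul_sub_l, <- mul_assoc, <- Hem, <- Hem, add_opp. reflexivity.
    - exfalso. apply Hym. apply H2; auto. }
  assert (He0 : e <> zero) by (intro E; apply Hm0; rewrite Hem, E, mul_0l; auto).
  set (K' := fun z => exists b, z = mul b e).
  assert (hK' : left_ideal A K').
  { split; [|split; [|split]].
    - exists zero. rewrite mul_0l; auto.
    - intros x y1 [b ->] [b' ->]. exists (add b b'). rewrite mul_add_l; auto.
    - intros c x [b ->]. exists (scal c b). rewrite mul_scal_l; auto.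
    - intros c x [b ->]. exists (mul c b). rewrite mul_assoc; auto. }
  assert (HLe : forall l, L l -> mul l e = l).
  { destruct (Hm K' hK') as [H2|H2].
    - intros x [b ->]. apply li_mul; auto.
    - exfalso. apply He0. apply H2. exists one. rewrite mul_one_l; auto.
    - intros l Hl. destruct (H2 l Hl) as [b ->]. rewrite <- mul_assoc, Hee; auto. }
  exists e. split; [|split]; auto. split; [|split]; auto.
  apply (minimal_ext L); auto. intro x; split; intro Hx.
  - apply HLe; auto.
  - rewrite <- Hx. apply li_mul; auto.
Qed.

End Alg.

Section Vsum.
Variable A : CBanachAlgebra.
Implicit Types x y z : A.

Lemma vsum_ext (v w : nat -> A) n : (forall i, (i < n)%nat -> v i = w i) -> vsum A v n = vsum A w n.
Proof. induction n; simpl; intros; auto. rewrite IHn, H; auto. Qed.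

Lemma mul_vsum_l a (v : nat -> A) n : mul a (vsum A v n) = vsum A (fun i => mul a (v i)) n.
Proof. induction n; simpl. apply mul_0r. rewrite mul_add_r, IHn; auto. Qed.

Lemma mul_vsum_r a (v : nat -> A) n : mul (vsum A v n) a = vsum A (fun i => mul (v i) a) n.
Proof. induction n; simpl. apply mul_0l. rewrite mul_add_l, IHn; auto. Qed.

Lemma scal_vsum c (v : nat -> A) n : scal c (vsum A v n) = vsum A (fun i => scal c (v i)) n.
Proof. induction n; simpl. apply scal_zero. rewrite scal_add_vec, IHn; auto. Qed.

Lemma vsum_add (v w : nat -> A) n : vsum A (fun i => add (v i) (w i)) n = add (vsum A v n) (vsum A w n).
Proof.
  induction n; simpl. rewrite add_zero; auto. rewrite IHn.
  rewrite <- !add_assoc. f_equal. rewrite !add_assoc. f_equal. apply add_comm.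
Qed.

Definition vapp (v : nat -> A) n (w : nat -> A) := fun i => if Nat.ltb i n then v i else w (i - n)%nat.

Lemma vsum_app (v w : nat -> A) n m : vsum A (vapp v n w) (n + m) = add (vsum A v n) (vsum A w m).
Proof.
  induction m.
  - rewrite Nat.add_0_r. change (vsum A w 0) with (@zero A). rewrite add_zero. apply vsum_ext. intros i Hi. unfold vapp.
    destruct (Nat.ltb_spec i n); [auto|lia].
  - rewrite Nat.add_succ_r. simpl. rewrite IHm, add_assoc. f_equal. unfold vapp.
    destruct (Nat.ltb_spec (n+m) n); [lia|]. f_equal; lia.
Qed.

Lemma soc_zero : soc A zero.
Proof. exists O, (fun _ => zero). split. intros; lia. reflexivity. Qed.

Lemma soc_add x y : soc A x -> soc A y -> soc A (add x y).
Proof.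
  intros [n [v [Hv ->]]] [m [w [Hw ->]]]. exists (n + m)%nat, (vapp v n w). split.
  - intros i Hi. unfold vapp. destruct (Nat.ltb_spec i n). apply Hv; auto. apply Hw; lia.
  - rewrite vsum_app; auto.
Qed.

Lemma soc_mul a x : soc A x -> soc A (mul a x).
Proof.
  intros [n [v [Hv ->]]]. exists n, (fun i => mul a (v i)). split.
  - intros i Hi. destruct (Hv i Hi) as [L [HL HLv]]. exists L. split; auto. apply li_mul; auto. apply HL.
  - apply mul_vsum_l.
Qed.

Lemma soc_scal c x : soc A x -> soc A (scal c x).
Proof.
  intros [n [v [Hv ->]]]. exists n, (fun i => scal c (v i)). split.
  - intros i Hi. destruct (Hv i Hi) as [L [HL HLv]]. exists L. split; auto. apply li_scal; auto. apply HL.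
  - apply scal_vsum.
Qed.

Lemma soc_opp x : soc A x -> soc A (opp x).
Proof. intro. rewrite <- scal_m1. apply soc_scal; auto. Qed.

Lemma soc_sub x y : soc A x -> soc A y -> soc A (add x (opp y)).
Proof. intros. apply soc_add; auto. apply soc_opp; auto. Qed.

Lemma soc_min L y : minimal_left_ideal A L -> L y -> soc A y.
Proof.
  intros HL Hy. exists 1%nat, (fun _ => y). split.
  - intros i Hi. exists L; auto.
  - simpl. rewrite add_0l; auto.
Qed.

End Vsum.

Definition opA (A : CBanachAlgebra) : CBanachAlgebra.
Proof.
  refine {| car := car A; add := @add A; opp := @opp A; zero := @zero A;
            mul := fun x y => @mul A y x; one := @one A; scal := @scal A; norm := @norm A |}.
  - apply add_assoc. - apply add_comm. - apply add_zero. - apply add_opp.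
  - apply scal_assoc. - apply scal_one. - apply scal_add_vec. - apply scal_add_scal.
  - intros; symmetry; apply mul_assoc. - apply mul_one_r. - apply mul_one_l.
  - intros; apply mul_add_r. - intros; apply mul_add_l.
  - intros; apply mul_scal_r. - intros; apply mul_scal_l.
  - apply norm_eq0. - apply norm_triangle. - apply norm_scal.
  - intros; rewrite Rmult_comm; apply norm_mul.
  - apply complete.
Defined.

Lemma semiprime_op (A : CBanachAlgebra) : semiprime A -> semiprime (opA A).
Proof.
  intros H u Hu. apply H. intro a. simpl in Hu. rewrite <- mul_assoc. apply Hu.
Qed.

Section Div.
Variable A : CBanachAlgebra.
Implicit Types x y z u e f : A.

Lemma MI_left_inv e b : MI A e -> mul e b = b -> mul b e = b -> b <> zero ->
  exists c, mul e c = c /\ mul c e = c /\ mul c b = e.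
Proof.
  intros [Hee [He0 [hPe [_ Hm]]]] Heb Hbe Hb0.
  set (J := fun z => exists a, z = mul a b).
  assert (hJ : left_ideal A J).
  { split; [|split; [|split]].
    - exists zero. rewrite mul_0l; auto.
    - intros x y [a ->] [a' ->]. exists (add a a'). rewrite mul_add_l; auto.
    - intros c x [a ->]. exists (scal c a). rewrite mul_scal_l; auto.
    - intros c x [a ->]. exists (mul c a). rewrite mul_assoc; auto. }
  destruct (Hm J hJ) as [H|H].
  - intros x [a ->]. rewrite <- mul_assoc, Hbe; auto.
  - exfalso. apply Hb0. apply H. exists one. rewrite mul_one_l; auto.
  - destruct (H e Hee) as [d Hd].
    exists (mul e (mul d e)). split; [|split].
    + rewrite mul_assoc, Hee; auto.
    + rewrite <- !mul_assoc, Hee; auto.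
    + rewrite <- !mul_assoc, Heb, <- Hd; auto.
Qed.

Lemma MI_div e b : MI A e -> mul e b = b -> mul b e = b -> b <> zero ->
  exists c, mul e c = c /\ mul c e = c /\ mul c b = e /\ mul b c = e.
Proof.
  intros HMI Heb Hbe Hb0. destruct (MI_left_inv e b) as [c [Hec [Hce Hcb]]]; auto.
  assert (Hc0 : c <> zero) by (intro E; rewrite E, mul_0l in Hcb; destruct HMI as [_ [He0 _]]; auto).
  destruct (MI_left_inv e c) as [c' [Hec' [Hce' Hcc']]]; auto.
  exists c. repeat split; auto.
  assert (c' = b).
  { rewrite <- Hce', <- Hcb, mul_assoc, Hcc'; auto. }
  subst; auto.
Qed.

Lemma MI_right_unit e t : semiprime A -> MI A e -> mul e t = t -> t <> zero -> exists s, mul t s = e.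
Proof.
  intros hSP HMI Het Ht0. pose proof HMI as [Hee _].
  assert (exists a, mul t (mul a e) <> zero) as [a Ha].
  { apply NNPP. intro H. apply Ht0. apply hSP. intro a.
    rewrite <- Het at 2. rewrite mul_assoc.
    replace (mul (mul t a) e) with (@zero A). apply mul_0l.
    symmetry. apply NNPP. intro H'. apply H. exists a. rewrite mul_assoc. auto. }
  set (b := mul t (mul a e)).
  destruct (MI_div e b) as [c [Hec [Hce [Hcb Hbc]]]]; auto.
  - unfold b. rewrite mul_assoc, Het; auto.
  - unfold b. rewrite <- !mul_assoc, Hee; auto.
  - exists (mul (mul a e) c). rewrite mul_assoc. auto.
Qed.

Lemma min_in_op y : semiprime A -> (exists L, minimal_left_ideal A L /\ L y) ->
  exists R, minimal_left_ideal (opA A) R /\ R y.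
Proof.
  intros hSP [L [HL Hy]]. destruct (brauer A L y hSP HL Hy) as [e [HMI [Le HLe]]].
  pose proof HMI as [Hee [He0 _]].
  destruct (classic (y = zero)) as [Hy0|Hy0].
  - exists (fun z => mul e z = z). split.
    + split; [split; [|split; [|split]]|split]; cbn.
      * apply mul_0r.
      * intros x1 x2 H1 H2. simpl. rewrite mul_add_r, H1, H2; auto.
      * intros c x1 H1. simpl. rewrite mul_scal_r, H1; auto.
      * intros a x1 H1. simpl. rewrite mul_assoc, H1; auto.
      * exists e. split; auto.
      * intros J hJ HJ. destruct (classic (forall x, J x -> x = zero)) as [H|H]; [left; auto|right].
        apply not_all_ex_not in H. destruct H as [j Hj]. apply imply_to_and in Hj. destruct Hj as [Jj Hj0].
        destruct (MI_right_unit e j) as [s Hs]; auto.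
        assert (Je : J e) by (rewrite <- Hs; apply (li_mul (opA A) J s j hJ Jj)).
        intros x Hx. simpl in Hx. rewrite <- Hx. apply (li_mul (opA A) J x e hJ Je).
    + subst y. apply mul_0r.
  - exists (fun z => exists a, z = mul y a). split.
    + split; [split; [|split; [|split]]|split]; cbn.
      * exists zero. rewrite mul_0r; auto.
      * intros x1 x2 [a1 ->] [a2 ->]. exists (add a1 a2). simpl. rewrite mul_add_r; auto.
      * intros c x1 [a1 ->]. exists (scal c a1). simpl. rewrite mul_scal_r; auto.
      * intros a x1 [a1 ->]. exists (mul a1 a). simpl. rewrite mul_assoc; auto.
      * exists y. split; auto. exists one. rewrite mul_one_r; auto.
      * intros J hJ HJ. destruct (classic (forall x, J x -> x = zero)) as [H|H]; [left; auto|right].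
        apply not_all_ex_not in H. destruct H as [j Hj]. apply imply_to_and in Hj. destruct Hj as [Jj Hj0].
        destruct (HJ j Jj) as [a Ha].
        assert (Ht0 : mul e a <> zero).
        { intro E. apply Hj0. rewrite Ha, <- (HLe y Hy), <- mul_assoc, E, mul_0r; auto. }
        destruct (MI_right_unit e (mul e a)) as [s Hs]; auto.
        { rewrite mul_assoc, Hee; auto. }
        assert (Jy : J y).
        { replace y with (mul j s). apply (li_mul (opA A) J s j hJ Jj).
          rewrite Ha. rewrite <- (HLe y Hy) at 1. rewrite <- !mul_assoc, (mul_assoc e a s), Hs. apply HLe; auto. }
        intros x [b ->]. apply (li_mul (opA A) J b y hJ Jy).
    + exists one. rewrite mul_one_r; auto.
Qed.

Lemma soc_op x : semiprime A -> soc A x -> soc (opA A) x.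
Proof.
  intros hSP [n [v [Hv ->]]]. exists n, v. split.
  - intros i Hi. apply min_in_op; auto.
  - reflexivity.
Qed.

End Div.

Lemma soc_op_inv (A : CBanachAlgebra) x : semiprime A -> soc (opA A) x -> soc A x.
Proof.
  intros hSP H. pose proof (soc_op (opA A) x (semiprime_op A hSP) H) as H'. exact H'.
Qed.

Lemma soc_mul_r (A : CBanachAlgebra) a x : semiprime A -> soc A x -> soc A (mul x a).
Proof.
  intros hSP H. apply soc_op_inv; auto. apply (soc_mul (opA A) a x). apply soc_op; auto.
Qed.

Section Step.
Variable B : CBanachAlgebra.
Implicit Types x y z u e f : B.

Lemma fprime_id f e w :
  mul w (add (add f e) (opp (mul f e))) = add (mul w f) (mul (add w (opp (mul w f))) e).
Proof. ncring. Qed.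

Lemma fprime_idem f e : mul f f = f -> mul e e = e -> mul e f = zero ->
  mul (add (add f e) (opp (mul f e))) (add (add f e) (opp (mul f e))) = add (add f e) (opp (mul f e)).
Proof.
  intros Hf He Hef.
  rewrite fprime_id.
  assert (H1 : mul (add (add f e) (opp (mul f e))) f = f).
  { replace (mul (add (add f e) (opp (mul f e))) f) with (add (add (mul f f) (mul e f)) (opp (mul f (mul e f)))) by ncring.
    rewrite Hef, Hf, mul_0r, opp_zero, !add_zero; auto. }
  rewrite H1.
  replace (mul (add (add (add f e) (opp (mul f e))) (opp f)) e) with (add (mul e e) (opp (mul f (mul e e)))) by ncring.
  rewrite He. ncring.
Qed.

Lemma step f L y : semiprime B -> mul f f = f -> soc B f -> minimal_left_ideal B L -> L y ->
  exists f', mul f' f' = f' /\ soc B f' /\ mul y f' = y /\ (forall z, mul z f = z -> mul z f' = z).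
Proof.
  intros hSP Hff Hsf HL Hy. pose proof HL as [hL [_ Hm]].
  destruct (classic (forall l, L l -> mul l f = l)) as [Hall|Hn].
  { exists f. repeat split; auto. }
  apply not_all_ex_not in Hn. destruct Hn as [l0 Hl0]. apply imply_to_and in Hl0. destruct Hl0 as [Ll0 Hl0].
  set (M := fun z => exists l, L l /\ z = add l (opp (mul l f))).
  assert (hM : left_ideal B M).
  { split; [|split; [|split]].
    - exists zero. split. apply li_zero; auto. rewrite mul_0l, opp_zero, add_zero; auto.
    - intros x1 x2 [l1 [H1 ->]] [l2 [H2 ->]]. exists (add l1 l2). split. apply li_add; auto. ncring.
    - intros c x1 [l1 [H1 ->]]. exists (scal c l1). split. apply li_scal; auto.
      rewrite scal_add_vec, scal_opp, mul_scal_l; auto.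
    - intros a x1 [l1 [H1 ->]]. exists (mul a l1). split. apply li_mul; auto. ncring. }
  assert (HMm : minimal_left_ideal B M).
  { split; [auto|split].
    - exists (add l0 (opp (mul l0 f))). split. exists l0; auto.
      intro E. apply Hl0. symmetry. apply sub_eq0; auto.
    - intros J hJ HJ.
      set (J' := fun l => L l /\ J (add l (opp (mul l f)))).
      assert (hJ' : left_ideal B J').
      { split; [|split; [|split]].
        - split. apply li_zero; auto. rewrite mul_0l, opp_zero, add_zero. apply li_zero; auto.
        - intros x1 x2 [H1 K1] [H2 K2]. split. apply li_add; auto.
          replace (add (add x1 x2) (opp (mul (add x1 x2) f))) with
            (add (add x1 (opp (mul x1 f))) (add x2 (opp (mul x2 f)))) by ncring.
          apply li_add; auto.
        - intros c x1 [H1 K1]. split. apply li_scal; auto.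
          rewrite mul_scal_l, <- scal_opp, <- scal_add_vec. apply li_scal; auto.
        - intros a x1 [H1 K1]. split. apply li_mul; auto.
          replace (add (mul a x1) (opp (mul (mul a x1) f))) with (mul a (add x1 (opp (mul x1 f)))) by ncring.
          apply li_mul; auto. }
      destruct (Hm J' hJ') as [H|H].
      + intros x [Hx _]; auto.
      + left. intros z Jz. destruct (HJ z Jz) as [l [Hl ->]].
        assert (l = zero) as -> by (apply H; split; auto).
        rewrite mul_0l, opp_zero, add_zero; auto.
      + right. intros z [l [Hl ->]]. apply (H l Hl). }
  destruct (brauer B M (add l0 (opp (mul l0 f))) hSP HMm) as [e [[Hee [He0 _]] [Me HMe]]].
  { exists l0; auto. }
  assert (Hef : mul e f = zero).
  { destruct Me as [l1 [_ ->]]. rewrite mul_sub_l, <- mul_assoc, Hff, add_opp; auto. }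
  exists (add (add f e) (opp (mul f e))). split; [|split; [|split]].
  - apply fprime_idem; auto.
  - apply soc_sub. apply soc_add; auto. apply (soc_min B M); auto. apply soc_mul. apply (soc_min B M); auto.
  - rewrite fprime_id. rewrite HMe. ncring. exists y; auto.
  - intros z Hz. rewrite fprime_id, Hz, add_opp, mul_0l, add_zero; auto.
Qed.

Lemma step_soc x f : semiprime B -> mul f f = f -> soc B f -> soc B x ->
  exists f', mul f' f' = f' /\ soc B f' /\ mul x f' = x /\ (forall z, mul z f = z -> mul z f' = z).
Proof.
  intros hSP Hff Hsf [n [v [Hv ->]]]. revert f Hff Hsf. induction n; intros f Hff Hsf.
  - exists f. repeat split; auto. simpl. apply mul_0l.
  - destruct (IHn (fun i Hi => Hv i (Nat.lt_lt_succ_r _ _ Hi)) f Hff Hsf) as [f1 [H1 [S1 [X1 P1]]]].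
    destruct (Hv n (Nat.lt_succ_diag_r n)) as [L [HL Ly]].
    destruct (step f1 L (v n) hSP H1 S1 HL Ly) as [f2 [H2 [S2 [X2 P2]]]].
    exists f2. repeat split; auto. simpl. rewrite mul_add_l, P2, X2; auto.
Qed.

Lemma step_list n (w : nat -> B) : semiprime B -> (forall i, (i < n)%nat -> soc B (w i)) ->
  exists f, soc B f /\ forall i, (i < n)%nat -> mul (w i) f = w i.
Proof.
  intros hSP Hw.
  assert (exists f, mul f f = f /\ soc B f /\ forall i, (i < n)%nat -> mul (w i) f = w i) as [f [_ [H1 H2]]];
    [|exists f; auto].
  induction n.
  - exists zero. split; [apply mul_0l|split]. apply soc_zero. intros; lia.
  - destruct IHn as [f [Hf [Sf Xf]]]. intros; apply Hw; lia.
    destruct (step_soc (w n) f hSP Hf Sf (Hw n (Nat.lt_succ_diag_r n))) as [f' [H1 [S1 [X1 P1]]]].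
    exists f'. repeat split; auto. intros i Hi. destruct (Nat.eq_dec i n) as [->|Hne]; auto.
    apply P1. apply Xf. lia.
Qed.

End Step.

Lemma soc_right_unit (A : CBanachAlgebra) x : semiprime A -> soc A x -> exists f, soc A f /\ mul x f = x.
Proof.
  intros hSP Hx. destruct (step_list A 1 (fun _ => x) hSP) as [f [Hf Hx']].
  intros; auto. exists f; split; auto. apply (Hx' O); lia.
Qed.

Lemma soc_left_unit (A : CBanachAlgebra) x : semiprime A -> soc A x -> exists g, soc A g /\ mul g x = x.
Proof.
  intros hSP Hx. destruct (soc_right_unit (opA A) x (semiprime_op A hSP)) as [g [Hg Hx']].
  apply soc_op; auto. exists g; split; auto. apply soc_op_inv; auto.
Qed.

Add Field Cfld : Coquelicot.Complex.C_field_theory.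

Definition Cinv' (c : Defs.C) : Defs.C := Coquelicot.Complex.Cinv c.

Lemma Cinv'_l (c : Defs.C) : c <> Defs.C0 -> Cmul (Cinv' c) c = Defs.C1.
Proof. intro H. apply (Coquelicot.Complex.Cinv_l c H). Qed.

Section Scal.
Variable A : CBanachAlgebra.
Implicit Types x y z : A.

Lemma scal_inj c x : c <> Defs.C0 -> scal c x = zero -> x = zero.
Proof.
  intros Hc H. rewrite <- (scal_one x), <- (Cinv'_l c Hc), <- scal_assoc, H. apply scal_zero.
Qed.

Lemma scal_eq_cancel a b x : scal a x = scal b x -> x <> zero -> a = b.
Proof.
  intros H Hx. apply NNPP. intro Hab.
  apply Hx. apply (scal_inj (Cadd a (Cmul (-1,0) b))).
  - intro E. apply Hab. unfold Cadd, Cmul, Defs.C0 in E. destruct a, b; simpl in E.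
    injection E; intros. f_equal; lra.
  - rewrite scal_add_scal, <- opp_scal, H, add_opp; auto.
Qed.

End Scal.

Section Dim.
Variable A : CBanachAlgebra.
Implicit Types x y z u e f : A.
Hypothesis GM : forall e b, MI A e -> mul e b = b -> mul b e = b -> exists c, b = scal c e.

Lemma dim1 e e' : semiprime A -> MI A e -> MI A e' ->
  exists u, mul u e' = u /\ forall a, exists c, mul (mul e a) e' = scal c u.
Proof.
  intros hSP HM HM'. pose proof HM as [Hee [He0 _]]. pose proof HM' as [Hee' [He0' _]].
  destruct (classic (forall a, mul (mul e a) e' = zero)) as [Hz|Hz].
  { exists zero. split. apply mul_0l. intro a. exists Defs.C0. rewrite Hz, scal_C0; auto. }
  apply not_all_ex_not in Hz. destruct Hz as [a0 Hu0].
  set (u := mul (mul e a0) e') in *.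
  assert (Hue : mul e u = u) by (unfold u; rewrite !mul_assoc, Hee; auto).
  assert (Hue' : mul u e' = u) by (unfold u; rewrite <- !mul_assoc, Hee'; auto).
  clearbody u.
  assert (exists a1, mul (mul u a1) u <> zero) as [a1 Ha1].
  { apply NNPP. intro H. apply Hu0. apply hSP. intro a. apply NNPP. intro H'. apply H. eauto. }
  set (v := mul (mul e' a1) e).
  assert (Hve : mul e' v = v) by (unfold v; rewrite !mul_assoc, Hee'; auto).
  assert (Hve' : mul v e = v) by (unfold v; rewrite <- !mul_assoc, Hee; auto).
  assert (Huvu : mul (mul u v) u = mul (mul u a1) u).
  { unfold v. replace (mul (mul u (mul (mul e' a1) e)) u) with (mul (mul (mul u e') a1) (mul e u)) by ncring.
    rewrite Hue', Hue; auto. }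
  clearbody v.
  destruct (GM e (mul u v) HM) as [lam Hlam].
  { rewrite mul_assoc, Hue; auto. }
  { rewrite <- mul_assoc, Hve'; auto. }
  assert (Hl0 : lam <> Defs.C0).
  { intro E. apply Ha1. rewrite <- Huvu, Hlam, E, scal_C0, mul_0l; auto. }
  destruct (GM e' (mul v u) HM') as [kap Hkap].
  { rewrite mul_assoc, Hve; auto. }
  { rewrite <- mul_assoc, Hue'; auto. }
  assert (Hu0' : u <> zero) by auto.
  assert (kap = lam).
  { apply (scal_eq_cancel A kap lam u); auto.
    transitivity (mul u (mul v u)). rewrite Hkap, mul_scal_r, Hue'; auto.
    rewrite mul_assoc, Hlam, mul_scal_l, Hue; auto. }
  subst kap.
  exists u. split; auto. intro a.
  set (t := mul (mul e a) e').
  assert (Hte : mul e t = t) by (unfold t; rewrite !mul_assoc, Hee; auto).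
  assert (Hte' : mul t e' = t) by (unfold t; rewrite <- !mul_assoc, Hee'; auto).
  clearbody t.
  destruct (GM e (mul t v) HM) as [mu Hmu].
  { rewrite mul_assoc, Hte; auto. }
  { rewrite <- mul_assoc, Hve'; auto. }
  set (q := Cmul mu (Cinv' lam)).
  exists q. apply sub_eq0.
  set (t' := add t (opp (scal q u))).
  assert (Ht'v : mul t' v = zero).
  { unfold t'. rewrite mul_sub_l, Hmu, mul_scal_l, Hlam, scal_assoc.
    replace (Cmul q lam) with mu. apply add_opp.
    unfold q, Cinv'. symmetry.
    change (@eq Coquelicot.Complex.C (Coquelicot.Complex.Cmult (Coquelicot.Complex.Cmult mu (Coquelicot.Complex.Cinv lam)) lam) mu).
    field. exact Hl0. }
  assert (Ht'e : mul t' e' = t').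
  { unfold t'. rewrite mul_sub_l, Hte', mul_scal_l, Hue'; auto. }
  fold t'. apply (scal_inj A lam); auto.
  rewrite <- Ht'e, <- mul_scal_r, <- Hkap, mul_assoc, Ht'v, mul_0l; auto.
Qed.

End Dim.

Section Main.
Variable A : CBanachAlgebra.
Implicit Types x y z u e f w : A.

Lemma vsum_split (h : nat -> A) a b : vsum A h (a + b) = add (vsum A h a) (vsum A (fun j => h (a + j)%nat) b).
Proof.
  induction b.
  - rewrite Nat.add_0_r. simpl. rewrite add_zero; auto.
  - rewrite Nat.add_succ_r. simpl. rewrite IHb, add_assoc; auto.
Qed.

Lemma vsum_double (F : nat -> nat -> A) n m : (0 < m)%nat ->
  vsum A (fun k => F (k / m)%nat (k mod m)%nat) (n * m) = vsum A (fun i => vsum A (fun j => F i j) m) n.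
Proof.
  intro Hm. induction n.
  - reflexivity.
  - rewrite Nat.mul_succ_l, vsum_split, IHn. simpl. f_equal. apply vsum_ext. intros j Hj.
    f_equal.
    + symmetry. apply (Nat.div_unique _ _ _ j); auto. lia.
    + symmetry. apply (Nat.mod_unique _ _ n j); auto. lia.
Qed.

Lemma vsum_zero n : vsum A (fun _ => zero) n = zero.
Proof. induction n; simpl; auto. rewrite IHn, add_zero; auto. Qed.

Lemma Cabs_realP5 r : Cabs (r, 0) = Rabs r.
Proof. unfold Cabs; simpl. replace (r * r + 0 * 0) with (Rsqr r) by (unfold Rsqr; ring). apply sqrt_Rsqr_abs. Qed.

Lemma normalize (d : A) : d <> zero -> norm (scal (/ norm d, 0) d) = 1.
Proof.
  intro H. pose proof (norm_pos A d H). rewrite norm_scal, Cabs_realP5, Rabs_right.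
  field. lra. apply Rle_ge. left. apply Rinv_0_lt_compat; auto.
Qed.

Lemma span_mul_r n (v : nat -> A) (c : nat -> Defs.C) f :
  (forall i, (i < n)%nat -> mul (v i) f = v i) ->
  mul (vsum A (fun i => scal (c i) (v i)) n) f = vsum A (fun i => scal (c i) (v i)) n.
Proof.
  intros H. rewrite mul_vsum_r. apply vsum_ext. intros i Hi. rewrite mul_scal_l, H; auto.
Qed.

Lemma span_mul_l n (v : nat -> A) (c : nat -> Defs.C) f :
  (forall i, (i < n)%nat -> mul f (v i) = v i) ->
  mul f (vsum A (fun i => scal (c i) (v i)) n) = vsum A (fun i => scal (c i) (v i)) n.
Proof.
  intros H. rewrite mul_vsum_l. apply vsum_ext. intros i Hi. rewrite mul_scal_r, H; auto.
Qed.

Lemma not_cv_one (s : nat -> R) : (forall k, s k = 1) -> ~ Un_cv s 0.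
Proof.
  intros Hs H. destruct (H (1/2)) as [N HN]. lra. specialize (HN N (le_n N)).
  rewrite Hs in HN. unfold Rdist in HN. rewrite Rminus_0_r, Rabs_R1 in HN. lra.
Qed.

Lemma cv_const0 : Un_cv (fun _ : nat => 0) 0.
Proof. intros eps Heps. exists O. intros. unfold Rdist. rewrite Rminus_0_r, Rabs_R0; auto. Qed.

Lemma tdz_if_annihilated x z : soc A z -> z <> zero ->
  (mul x z = zero \/ mul z x = zero) -> topological_divisor_of_zero_in A (soc A) x.
Proof.
  intros Hz Hz0 Hann. set (z1 := scal (/ norm z, 0) z).
  exists (fun _ => z1). split; [|split].
  - intros _. apply soc_scal; auto.
  - intros _. apply normalize; auto.
  - destruct Hann as [H|H]; [left|right]; unfold z1;
      [rewrite mul_scal_r, H, scal_zero, norm_zero | rewrite mul_scal_l, H, scal_zero, norm_zero];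
      apply cv_const0.
Qed.

Lemma dir_fd (hSP : semiprime A) :
  finite_dimensional A (soc A) -> exists x, soc A x /\ ~ topological_divisor_of_zero_in A (soc A) x.
Proof.
  intros [n [v [Hv Hspan]]].
  destruct (step_list A n v hSP Hv) as [f [Hf Hvf]].
  destruct (step_list (opA A) n v (semiprime_op A hSP)) as [g0 [Hg0 Hvg0]].
  { intros i Hi. apply soc_op; auto. }
  assert (Hg : soc A g0) by (apply soc_op_inv; auto).
  assert (Hvg : forall i, (i < n)%nat -> @mul A g0 (v i) = v i) by exact Hvg0.
  clear Hg0 Hvg0. rename g0 into g.
  assert (Rf : forall z, soc A z -> mul z f = z).
  { intros z Hz. destruct (Hspan z Hz) as [c ->]. apply span_mul_r; auto. }
  assert (Lg : forall z, soc A z -> @mul A g z = z).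
  { intros z Hz. destruct (Hspan z Hz) as [c ->]. apply span_mul_l. intros i Hi. apply (Hvg i Hi). }
  exists (add (add f g) (opp (mul f g))). split.
  - apply soc_sub. apply soc_add; auto. apply soc_mul; auto.
  - intros [zs [Hzs [Hn1 Hcv]]].
    assert (E1 : forall k, mul (add (add f g) (opp (mul f g))) (zs k) = zs k).
    { intro k. rewrite mul_sub_l, mul_add_l, (Lg (zs k)), <- mul_assoc, (Lg (zs k)); auto.
      ncring. }
    assert (E2 : forall k, mul (zs k) (add (add f g) (opp (mul f g))) = zs k).
    { intro k. rewrite mul_sub_r, mul_add_r, (Rf (zs k)), mul_assoc, (Rf (zs k)); auto.
      ncring. }
    destruct Hcv as [H|H]; revert H; apply not_cv_one; intro k; [rewrite E1|rewrite E2]; auto.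
Qed.

Hypothesis GM : forall e b, MI A e -> mul e b = b -> mul b e = b -> exists c, b = scal c e.

Lemma choice_nat (P : nat -> A -> Prop) n : (forall i, (i < n)%nat -> exists a, P i a) ->
  exists h : nat -> A, forall i, (i < n)%nat -> P i (h i).
Proof.
  intro H. assert (H' : forall i, exists a, (i < n)%nat -> P i a).
  { intro i. destruct (Nat.lt_ge_cases i n) as [Hi|Hi].
    - destruct (H i Hi) as [a Ha]. exists a; auto.
    - exists zero. intro; lia. }
  exists (fun i => proj1_sig (constructive_indefinite_description _ (H' i))).
  intros i Hi. exact (proj2_sig (constructive_indefinite_description _ (H' i)) Hi).
Qed.

Lemma soc_decomp_MI (hSP : semiprime A) x : soc A x ->
  exists n (yv ev : nat -> A), x = vsum A yv n /\
    forall i, (i < n)%nat -> MI A (ev i) /\ mul (yv i) (ev i) = yv i.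
Proof.
  intros [n [v [Hv ->]]]. exists n, v.
  destruct (choice_nat (fun i e => MI A e /\ mul (v i) e = v i) n) as [ev Hev].
  { intros i Hi. destruct (Hv i Hi) as [L [HL HLv]].
    destruct (brauer A L (v i) hSP HL HLv) as [e [HMI [Le HLe]]]. exists e. split; auto. }
  exists ev. split; auto.
Qed.

Lemma fd_from_units (hSP : semiprime A) f g :
  soc A f -> soc A g -> (forall w, soc A w -> w = mul (mul f w) g) -> finite_dimensional A (soc A).
Proof.
  intros Hf Hg Hw.
  destruct (soc_decomp_MI hSP f Hf) as [n [yv [ev [-> Hev]]]].
  destruct (soc_decomp_MI hSP g Hg) as [m [yv' [ev' [-> Hev']]]].
  destruct (Nat.eq_dec m 0) as [Hm0|Hm0].
  { exists O, (fun _ => zero). split. intros; lia. intros w Hw'. exists (fun _ => Defs.C0).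
    rewrite (Hw w Hw'), Hm0. simpl. rewrite mul_0r. reflexivity. }
  assert (HD : forall i j, exists u : A, exists cf : A -> Defs.C, ((i < n)%nat -> (j < m)%nat ->
    mul u (ev' j) = u /\ forall a, mul (mul (ev i) a) (ev' j) = scal (cf a) u)).
  { intros i j. destruct (Nat.lt_ge_cases i n) as [Hi|Hi]; [destruct (Nat.lt_ge_cases j m) as [Hj|Hj]|].
    - destruct (dim1 A GM (ev i) (ev' j) hSP (proj1 (Hev i Hi)) (proj1 (Hev' j Hj))) as [u [Hu Hc]].
      exists u. exists (fun a => proj1_sig (constructive_indefinite_description _ (Hc a))).
      intros _ _. split; auto. intro a. exact (proj2_sig (constructive_indefinite_description _ (Hc a))).
    - exists zero, (fun _ => Defs.C0). intros; lia.
    - exists zero, (fun _ => Defs.C0). intros; lia. }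
  assert (HD2 : exists (uu : nat -> nat -> A) (cf : nat -> nat -> A -> Defs.C), forall i j, (i < n)%nat -> (j < m)%nat ->
    mul (uu i j) (ev' j) = uu i j /\ forall a, mul (mul (ev i) a) (ev' j) = scal (cf i j a) (uu i j)).
  { exists (fun i j => proj1_sig (constructive_indefinite_description _ (HD i j))).
    exists (fun i j => proj1_sig (constructive_indefinite_description _ (proj2_sig (constructive_indefinite_description _ (HD i j))))).
    intros i j. exact (proj2_sig (constructive_indefinite_description _ (proj2_sig (constructive_indefinite_description _ (HD i j))))). }
  destruct HD2 as [uu [cf Huu]].
  exists (n * m)%nat, (fun k => mul (yv (k / m)%nat) (uu (k / m)%nat (k mod m)%nat)). split.
  - intros k Hk. assert (Hi : (k / m < n)%nat) by (apply Nat.Div0.div_lt_upper_bound; lia).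
    assert (Hj : (k mod m < m)%nat) by (apply Nat.mod_upper_bound; auto).
    destruct (Huu _ _ Hi Hj) as [Hu _]. destruct (Hev' _ Hj) as [HM' _].
    apply (soc_min A (fun z => mul z (ev' (k mod m)%nat) = z)). apply HM'.
    rewrite <- mul_assoc, Hu; auto.
  - intros w Hw'.
    exists (fun k => cf (k / m)%nat (k mod m)%nat (mul w (yv' (k mod m)%nat))).
    rewrite (vsum_double (fun i j => scal (cf i j (mul w (yv' j))) (mul (yv i) (uu i j)))) by lia.
    rewrite (Hw w Hw') at 1. rewrite <- mul_assoc, mul_vsum_r. apply vsum_ext. intros i Hi.
    rewrite !mul_vsum_l. apply vsum_ext. intros j Hj.
    destruct (Huu i j Hi Hj) as [_ Hc]. destruct (Hev i Hi) as [_ Hyi]. destruct (Hev' j Hj) as [_ Hyj].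
    rewrite <- mul_scal_r, <- Hc.
    rewrite <- Hyi at 1. rewrite <- Hyj at 1. ncring.
Qed.

Lemma dir_inf (hSP : semiprime A) x : infinite_dimensional A (soc A) -> soc A x ->
  topological_divisor_of_zero_in A (soc A) x.
Proof.
  intros Hinf Hx.
  destruct (soc_right_unit A x hSP Hx) as [f [Hf Hxf]].
  destruct (soc_left_unit A x hSP Hx) as [g [Hg Hgx]].
  destruct (classic (exists w, soc A w /\ add w (opp (mul f w)) <> zero)) as [[w [Hw Hd]]|H1].
  { apply (tdz_if_annihilated x (add w (opp (mul f w)))); auto.
    - apply soc_sub; auto. apply soc_mul; auto.
    - left. rewrite mul_sub_r, mul_assoc, Hxf, add_opp; auto. }
  destruct (classic (exists w, soc A w /\ add w (opp (mul w g)) <> zero)) as [[w [Hw Hd]]|H2].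
  { apply (tdz_if_annihilated x (add w (opp (mul w g)))); auto.
    - apply soc_sub; auto. apply soc_mul_r; auto.
    - right. rewrite mul_sub_l, <- mul_assoc, Hgx, add_opp; auto. }
  exfalso. apply Hinf. apply (fd_from_units hSP f g Hf Hg).
  intros w Hw.
  assert (E1 : mul f w = w).
  { symmetry. apply sub_eq0. apply NNPP. intro H. apply H1. eauto. }
  assert (E2 : mul w g = w).
  { symmetry. apply sub_eq0. apply NNPP. intro H. apply H2. eauto. }
  rewrite E1, E2; auto.
Qed.

End Main.

Notation CC := Coquelicot.Complex.C.

Lemma Cabs_Cmod (c : Defs.C) : Cabs c = Coquelicot.Complex.Cmod c.
Proof. unfold Cabs, Coquelicot.Complex.Cmod. f_equal. simpl. ring. Qed.

Lemma Cabs_mul a b : Cabs (Cmul a b) = Cabs a * Cabs b.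
Proof. rewrite !Cabs_Cmod. apply Coquelicot.Complex.Cmod_mult. Qed.

Lemma Cabs_nonneg c : 0 <= Cabs c.
Proof. unfold Cabs. apply sqrt_pos. Qed.

Lemma Cabs_fst c : Rabs (fst c) <= Cabs c.
Proof.
  unfold Cabs. rewrite <- sqrt_Rsqr_abs. apply sqrt_le_1_alt. unfold Rsqr.
  pose proof (Rle_0_sqr (snd c)). unfold Rsqr in H. lra.
Qed.

Lemma Cabs_snd c : Rabs (snd c) <= Cabs c.
Proof.
  unfold Cabs. rewrite <- sqrt_Rsqr_abs. apply sqrt_le_1_alt. unfold Rsqr.
  pose proof (Rle_0_sqr (fst c)). unfold Rsqr in H. lra.
Qed.

Lemma Cabs_le_sum c : Cabs c <= Rabs (fst c) + Rabs (snd c).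
Proof.
  unfold Cabs. rewrite <- (sqrt_Rsqr (Rabs (fst c) + Rabs (snd c))).
  2:{ pose proof (Rabs_pos (fst c)); pose proof (Rabs_pos (snd c)); lra. }
  apply sqrt_le_1_alt. unfold Rsqr.
  pose proof (Rabs_pos (fst c)); pose proof (Rabs_pos (snd c)).
  replace (fst c * fst c) with (Rabs (fst c) * Rabs (fst c)).
  replace (snd c * snd c) with (Rabs (snd c) * Rabs (snd c)).
  nra.
  rewrite <- Rabs_mult. apply Rabs_right. nra.
  rewrite <- Rabs_mult. apply Rabs_right. nra.
Qed.

Lemma Cabs_real r : Cabs (r, 0) = Rabs r.
Proof. unfold Cabs; simpl. replace (r * r + 0 * 0) with (Rsqr r) by (unfold Rsqr; ring). apply sqrt_Rsqr_abs. Qed.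

Lemma Cabs_sq c : Cabs c * Cabs c = fst c * fst c + snd c * snd c.
Proof. unfold Cabs. apply sqrt_sqrt. nra. Qed.

Definition Csub (a b : Defs.C) : Defs.C := (fst a - fst b, snd a - snd b).

Lemma Cabs_Csub_mul r a b : Cabs (Csub (Cmul r a) (Cmul r b)) = Cabs r * Cabs (Csub a b).
Proof.
  rewrite <- Cabs_mul. unfold Csub, Cmul. f_equal. simpl. f_equal; ring.
Qed.

Lemma Cabs_Csub_sym a b : Cabs (Csub a b) = Cabs (Csub b a).
Proof. unfold Cabs, Csub; simpl. f_equal. ring. Qed.

Lemma Cabs_Csub_real a b : Cabs (Csub (a, 0) (b, 0)) = Rabs (a - b).
Proof. unfold Csub; simpl. rewrite <- Cabs_real. f_equal. f_equal. ring. Qed.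

Lemma scal_sub (A : CBanachAlgebra) a b (x : A) : add (scal a x) (opp (scal b x)) = scal (Csub a b) x.
Proof.
  rewrite opp_scal, <- scal_add_scal. f_equal. unfold Cadd, Cmul, Csub; simpl. f_equal; ring.
Qed.

Definition sq (z : Defs.C) : Defs.C :=
  (sqrt ((Cabs z + fst z) / 2),
   if Rle_dec 0 (snd z) then sqrt ((Cabs z - fst z) / 2) else - sqrt ((Cabs z - fst z) / 2)).

Lemma sq_fst_nonneg z : 0 <= fst (sq z).
Proof. unfold sq; simpl. apply sqrt_pos. Qed.

Lemma sq_bounds z : 0 <= (Cabs z + fst z) / 2 /\ 0 <= (Cabs z - fst z) / 2.
Proof. pose proof (Cabs_fst z) as H. unfold Rabs in H. destruct (Rcase_abs (fst z)); split; lra. Qed.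

Lemma sq_sq z : Cmul (sq z) (sq z) = z.
Proof.
  destruct (sq_bounds z) as [H1 H2]. pose proof (Cabs_sq z) as HC.
  destruct z as [a b]. unfold sq, Cmul; simpl in *. set (r := Cabs (a, b)) in *.
  assert (Hb : sqrt ((r + a) / 2) * sqrt ((r - a) / 2) = Rabs (b / 2)).
  { rewrite <- sqrt_mult by auto. rewrite <- sqrt_Rsqr_abs. f_equal. unfold Rsqr. field_simplify. nra. }
  destruct (Rle_dec 0 b) as [Hb0|Hb0]; f_equal.
  - rewrite !sqrt_sqrt by auto. field.
  - transitivity (2 * (sqrt ((r + a) / 2) * sqrt ((r - a) / 2))); [ring|].
    rewrite Hb. rewrite Rabs_right by lra. field.
  - replace (sqrt ((r + a) / 2) * sqrt ((r + a) / 2) - - sqrt ((r - a) / 2) * - sqrt ((r - a) / 2))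
      with (sqrt ((r + a) / 2) * sqrt ((r + a) / 2) - sqrt ((r - a) / 2) * sqrt ((r - a) / 2)) by ring.
    rewrite !sqrt_sqrt by auto. field.
  - replace (sqrt ((r + a) / 2) * - sqrt ((r - a) / 2) + - sqrt ((r - a) / 2) * sqrt ((r + a) / 2))
     with (- (2 * (sqrt ((r + a) / 2) * sqrt ((r - a) / 2)))) by ring.
    rewrite Hb. rewrite Rabs_left by lra. field.
Qed.

Lemma sq_abs z : Cabs (sq z) = sqrt (Cabs z).
Proof.
  destruct (sq_bounds z) as [H1 H2]. unfold Cabs at 1. f_equal. unfold sq; simpl.
  destruct (Rle_dec 0 (snd z)).
  - rewrite !sqrt_sqrt by auto. field.
  - replace (- sqrt ((Cabs z - fst z) / 2) * - sqrt ((Cabs z - fst z) / 2)) with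
      (sqrt ((Cabs z - fst z) / 2) * sqrt ((Cabs z - fst z) / 2)) by ring.
    rewrite !sqrt_sqrt by auto. field.
Qed.

Lemma sq_abs1 z : Cabs z = 1 -> Cabs (sq z) = 1.
Proof. intro H. rewrite sq_abs, H. apply sqrt_1. Qed.

Lemma sq_contract z : Cabs z = 1 -> Cabs (Csub (sq z) Defs.C1) <= 3/4 * Cabs (Csub z Defs.C1).
Proof.
  intro Hz. set (s := sq z). pose proof (sq_abs1 z Hz) as Hs. fold s in Hs.
  pose proof (sq_fst_nonneg z) as Hre. fold s in Hre.
  assert (E : Csub z Defs.C1 = Cmul (Csub s Defs.C1) (Cadd s Defs.C1)).
  { rewrite <- (sq_sq z). fold s. destruct s as [a b]. unfold Csub, Cmul, Cadd, Defs.C1; simpl. f_equal; ring. }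
  rewrite E, Cabs_mul.
  assert (H2 : 4/3 <= Cabs (Cadd s Defs.C1)).
  { pose proof (Cabs_sq (Cadd s Defs.C1)) as HA. pose proof (Cabs_sq s) as HB.
    rewrite Hs in HB. pose proof (Cabs_nonneg (Cadd s Defs.C1)).
    destruct s as [a b]. unfold Cadd, Defs.C1 in *; simpl in *. nra. }
  pose proof (Cabs_nonneg (Csub s Defs.C1)). nra.
Qed.

Fixpoint rho (m i : nat) : Defs.C :=
  match m with
  | O => Defs.C1
  | S m' => if Nat.even i then sq (rho m' (Nat.div2 i)) else Cmul (-1, 0) (sq (rho m' (Nat.div2 i)))
  end.

Lemma rho_abs m i : Cabs (rho m i) = 1.
Proof.
  revert i; induction m; intro i; simpl.
  - unfold Cabs, Defs.C1; simpl. replace (1 * 1 + 0 * 0) with 1 by ring. apply sqrt_1.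
  - destruct (Nat.even i).
    + apply sq_abs1; auto.
    + rewrite Cabs_mul, Cabs_m1, sq_abs1; auto. ring.
Qed.

Lemma rho_even m i : rho (S m) (2 * i) = sq (rho m i).
Proof.
  change (rho (S m) (2 * i)) with (if Nat.even (2 * i) then sq (rho m (Nat.div2 (2 * i))) else Cmul (-1, 0) (sq (rho m (Nat.div2 (2 * i))))).
  rewrite Nat.even_even, Nat.div2_double. reflexivity.
Qed.

Lemma rho_odd m i : rho (S m) (S (2 * i)) = Cmul (-1, 0) (sq (rho m i)).
Proof.
  change (rho (S m) (S (2 * i))) with (if Nat.even (S (2 * i)) then sq (rho m (Nat.div2 (S (2 * i)))) else Cmul (-1, 0) (sq (rho m (Nat.div2 (S (2 * i)))))).
  replace (Nat.even (S (2 * i))) with false. rewrite Nat.div2_succ_double. reflexivity.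
  rewrite <- Nat.add_1_r, Nat.even_odd. reflexivity.
Qed.

Fixpoint om (m : nat) : Defs.C := match m with O => (-1, 0) | S m' => sq (om m') end.

Lemma Cpow2_sq z : Coquelicot.Complex.Cpow (sq z) 2 = z.
Proof.
  simpl. rewrite Coquelicot.Complex.Cmult_1_r. apply sq_sq.
Qed.

Lemma om_pow m : Coquelicot.Complex.Cpow (om m) (2 ^ m) = (-1, 0).
Proof.
  induction m.
  - simpl. unfold Coquelicot.Complex.Cmult, Coquelicot.Complex.RtoC; simpl. f_equal; ring.
  - rewrite Nat.pow_succ_r', Coquelicot.Complex.Cpow_mult_r. simpl om. rewrite Cpow2_sq. auto.
Qed.

Lemma om_abs m : Cabs (om m) = 1.
Proof. induction m. apply Cabs_m1. simpl. apply sq_abs1; auto. Qed.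

Lemma om_close m : Cabs (Csub (om m) Defs.C1) <= 2 * (3/4) ^ m.
Proof.
  induction m.
  - simpl. unfold Csub, Defs.C1; simpl. replace (-1 - 1, 0 - 0) with (-2, 0) by (f_equal; ring).
    rewrite Cabs_real, Rabs_left by lra. lra.
  - simpl om. eapply Rle_trans. apply sq_contract. apply om_abs. simpl. lra.
Qed.

Section GMalg.

Variable A : CBanachAlgebra.
Variables e x : A.
Hypothesis Hee : mul e e = e.
Hypothesis He0 : e <> zero.
Hypothesis Hdiv : forall b, mul e b = b -> mul b e = b -> b <> zero ->
  exists c, mul e c = c /\ mul c e = c /\ mul c b = e /\ mul b c = e.
Hypothesis Hex : mul e x = x.
Hypothesis Hxe : mul x e = x.
Hypothesis Hnot : forall c, x <> scal c e.

Definition inB (b : A) := mul e b = b /\ mul b e = b.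

Lemma inB_e : inB e. Proof. split; auto. Qed.
Lemma inB_x : inB x. Proof. split; auto. Qed.
Lemma inB_zero : inB zero. Proof. split. apply mul_0r. apply mul_0l. Qed.
Lemma inB_add b c : inB b -> inB c -> inB (add b c).
Proof. intros [H1 H2] [H3 H4]. split. rewrite mul_add_r, H1, H3; auto. rewrite mul_add_l, H2, H4; auto. Qed.
Lemma inB_opp b : inB b -> inB (opp b).
Proof. intros [H1 H2]. split. rewrite mul_opp_r, H1; auto. rewrite mul_opp_l, H2; auto. Qed.
Lemma inB_scal c b : inB b -> inB (scal c b).
Proof. intros [H1 H2]. split. rewrite mul_scal_r, H1; auto. rewrite mul_scal_l, H2; auto. Qed.
Lemma inB_mul b c : inB b -> inB c -> inB (mul b c).
Proof. intros [H1 H2] [H3 H4]. split. rewrite mul_assoc, H1; auto. rewrite <- mul_assoc, H4; auto. Qed.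
Lemma inB_sub b c : inB b -> inB c -> inB (add b (opp c)).
Proof. intros; apply inB_add; auto; apply inB_opp; auto. Qed.

Lemma Inv_ex b : exists c, inB b -> b <> zero -> inB c /\ mul c b = e /\ mul b c = e.
Proof.
  destruct (classic (inB b /\ b <> zero)) as [[[H1 H2] H3]|H].
  - destruct (Hdiv b H1 H2 H3) as [c [? [? [? ?]]]]. exists c. intros. split; [split|]; auto.
  - exists zero. intros. exfalso. auto.
Qed.

Definition Inv b : A := proj1_sig (constructive_indefinite_description _ (Inv_ex b)).

Lemma Inv_spec b : inB b -> b <> zero -> inB (Inv b) /\ mul (Inv b) b = e /\ mul b (Inv b) = e.
Proof. unfold Inv. destruct (constructive_indefinite_description _ (Inv_ex b)); simpl. auto. Qed.

Lemma Inv_unique b c : inB b -> inB c -> mul b c = e -> Inv b = c.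
Proof.
  intros Hb Hc H.
  assert (b <> zero) by (intro E; rewrite E, mul_0l in H; auto).
  destruct (Inv_spec b Hb H0) as [HI [H1 H2]].
  rewrite <- (proj1 Hc), <- H1, <- mul_assoc, H. symmetry. apply (proj2 HI).
Qed.

Lemma nz_mul b c : inB b -> inB c -> b <> zero -> c <> zero -> mul b c <> zero.
Proof.
  intros Hb Hc Hb0 Hc0 E. apply Hc0. destruct (Inv_spec b Hb Hb0) as [_ [H1 _]].
  rewrite <- (proj1 Hc), <- H1, <- mul_assoc, E, mul_0r; auto.
Qed.

Lemma Inv_e : Inv e = e.
Proof. apply Inv_unique; auto; apply inB_e. Qed.

Lemma pair_prod y : inB y ->
  mul (add e (opp y)) (add e y) = add e (opp (mul y y)) /\
  mul (add e y) (add e (opp y)) = add e (opp (mul y y)).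
Proof.
  intros [H1 H2]. split.
  - transitivity (add (add (mul e e) (add (mul e y) (opp (mul y e)))) (opp (mul y y))). ncring.
    rewrite Hee, H1, H2, add_opp, add_zero; auto.
  - transitivity (add (add (mul e e) (add (mul y e) (opp (mul e y)))) (opp (mul y y))). ncring.
    rewrite Hee, H1, H2, add_opp, add_zero; auto.
Qed.

Lemma pair_nz y : inB y -> add e (opp y) <> zero -> add e y <> zero -> add e (opp (mul y y)) <> zero.
Proof.
  intros Hy H1 H2. rewrite <- (proj1 (pair_prod y Hy)). apply nz_mul; auto.
  apply inB_sub; auto; apply inB_e. apply inB_add; auto; apply inB_e.
Qed.

Lemma pair_inv_prod y : inB y -> add e (opp y) <> zero -> add e y <> zero ->
  Inv (add e (opp (mul y y))) = mul (Inv (add e (opp y))) (Inv (add e y)).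
Proof.
  intros Hy H1 H2.
  assert (HP : inB (add e (opp y))) by (apply inB_sub; auto; apply inB_e).
  assert (HQ : inB (add e y)) by (apply inB_add; auto; apply inB_e).
  destruct (Inv_spec _ HP H1) as [IP [IP1 IP2]]. destruct (Inv_spec _ HQ H2) as [IQ [IQ1 IQ2]].
  apply Inv_unique. apply inB_sub; auto. apply inB_e. apply inB_mul; auto. apply inB_mul; auto.
  rewrite <- (proj2 (pair_prod y Hy)). rewrite <- mul_assoc, (mul_assoc (add e (opp y))), IP2.
  rewrite (proj1 IQ), IQ2; auto.
Qed.

Lemma pair_inv_sum y : inB y -> add e (opp y) <> zero -> add e y <> zero ->
  add (Inv (add e (opp y))) (Inv (add e y)) = scal (2, 0) (Inv (add e (opp (mul y y)))).
Proof.
  intros Hy H1 H2.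
  assert (HP : inB (add e (opp y))) by (apply inB_sub; auto; apply inB_e).
  assert (HQ : inB (add e y)) by (apply inB_add; auto; apply inB_e).
  destruct (Inv_spec _ HP H1) as [IP [IP1 IP2]]. destruct (Inv_spec _ HQ H2) as [IQ [IQ1 IQ2]].
  assert (E : Inv (add e (opp (mul y y))) = scal (/2, 0) (add (Inv (add e (opp y))) (Inv (add e y)))).
  { apply Inv_unique. apply inB_sub; [apply inB_e|apply inB_mul; auto]. apply inB_scal, inB_add; auto.
    rewrite mul_scal_r, mul_add_r.
    rewrite <- (proj2 (pair_prod y Hy)) at 1. rewrite <- (proj1 (pair_prod y Hy)).
    rewrite <- !mul_assoc, IP2, IQ2, (proj2 HQ), (proj2 HP).
    replace (add (add e y) (add e (opp y))) with (scal (2,0) e).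
    rewrite scal_assoc. replace (Cmul (/ 2, 0) (2, 0)) with Defs.C1. apply scal_one.
    unfold Cmul, Defs.C1; simpl. f_equal; field.
    replace (2, 0) with (Cadd Defs.C1 Defs.C1) by (unfold Cadd, Defs.C1; simpl; f_equal; ring).
    rewrite scal_add_scal, scal_one. ncring. }
  rewrite E, scal_assoc. replace (Cmul (2, 0) (/ 2, 0)) with Defs.C1. rewrite scal_one; auto.
  unfold Cmul, Defs.C1; simpl. f_equal; field.
Qed.

Fixpoint pe (y : A) (n : nat) : A := match n with O => e | S k => mul y (pe y k) end.

Lemma inB_pe y n : inB y -> inB (pe y n).
Proof. intro Hy. induction n; simpl. apply inB_e. apply inB_mul; auto. Qed.

Lemma pe_add y a b : inB y -> pe y (a + b) = mul (pe y a) (pe y b).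
Proof.
  intro Hy. induction a; simpl. rewrite (proj1 (inB_pe y b Hy)); auto.
  rewrite IHa, mul_assoc; auto.
Qed.

Lemma pe_sq y n : inB y -> pe (mul y y) n = pe y (2 * n).
Proof.
  intro Hy. induction n. reflexivity.
  replace (2 * S n)%nat with (S (S (2 * n))) by lia. simpl. rewrite IHn.
  replace (n + (n + 0))%nat with (2 * n)%nat by lia. rewrite mul_assoc; auto.
Qed.

Lemma pe_scal c y n : pe (scal c y) n = scal (Coquelicot.Complex.Cpow c n) (pe y n).
Proof.
  induction n; simpl. symmetry. apply scal_one.
  rewrite IHn, mul_scal_l, mul_scal_r, scal_assoc. reflexivity.
Qed.

Lemma pe_1 y : inB y -> pe y 1 = y.
Proof. intros [H1 H2]. simpl. auto. Qed.

Lemma pe_norm y n : inB y -> norm (pe y (S n)) <= norm y ^ (S n).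
Proof.
  intro Hy. induction n.
  - rewrite pe_1; auto. simpl. rewrite Rmult_1_r. apply Rle_refl.
  - change (pe y (S (S n))) with (mul y (pe y (S n))).
    eapply Rle_trans. apply norm_mul. change (norm y ^ S (S n)) with (norm y * norm y ^ S n).
    apply Rmult_le_compat_l; auto. apply norm_nonneg.
Qed.


Lemma vsum_pair (h : nat -> A) n : vsum A h (2 * n) = vsum A (fun i => add (h (2 * i)%nat) (h (S (2 * i)))) n.
Proof.
  induction n. reflexivity.
  replace (2 * S n)%nat with (S (S (2 * n))) by lia.
  change (vsum A h (S (S (2*n)))) with (add (add (vsum A h (2*n)) (h (2*n)%nat)) (h (S (2*n)))).
  rewrite IHn. cbn [vsum]. rewrite add_assoc. reflexivity.
Qed.

Definition avg (m : nat) (g : nat -> A) : A := scal (/ (2 ^ m), 0) (vsum A g (2 ^ m)%nat).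

Lemma opp_via_m1 c (y : A) : scal (Cmul (-1, 0) c) y = opp (scal c y).
Proof. rewrite <- scal_assoc, scal_m1; auto. Qed.

Lemma scal_sq_mul c (y : A) : scal c (mul y y) = mul (scal (sq c) y) (scal (sq c) y).
Proof. rewrite mul_scal_l, mul_scal_r, scal_assoc, sq_sq; auto. Qed.

Lemma AV m : forall y, inB y -> (forall c, add e (opp (scal c y)) <> zero) ->
  avg m (fun i => Inv (add e (opp (scal (rho m i) y)))) = Inv (add e (opp (pe y (2 ^ m)%nat))).
Proof.
  induction m; intros y Hy Hc.
  - unfold avg. simpl. rewrite Rinv_1, add_0l, (proj2 Hy), scal_one.
    change (1, 0) with Defs.C1. rewrite !scal_one; auto.
  - unfold avg. rewrite Nat.pow_succ_r', vsum_pair.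
    assert (Hyy : inB (mul y y)) by (apply inB_mul; auto).
    assert (Hcyy : forall c, add e (opp (scal c (mul y y))) <> zero).
    { intro c. rewrite scal_sq_mul. apply (pair_nz (scal (sq c) y)). apply inB_scal; auto. apply Hc.
      rewrite <- (opp_opp A (scal (sq c) y)), <- opp_via_m1. apply Hc. }
    rewrite <- pe_sq by auto. rewrite <- (IHm (mul y y) Hyy Hcyy). unfold avg.
    rewrite (vsum_ext A _ (fun i => scal (2, 0) (Inv (add e (opp (scal (rho m i) (mul y y))))))).
    + rewrite <- scal_vsum, scal_assoc. f_equal. unfold Cmul; simpl. f_equal; field; apply pow_nonzero; lra.
    + intros i Hi. rewrite rho_even, rho_odd. rewrite opp_via_m1, opp_opp.
      rewrite pair_inv_sum. rewrite <- scal_sq_mul. reflexivity.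
      apply inB_scal; auto. apply Hc. rewrite <- (opp_opp A (scal _ y)), <- opp_via_m1. apply Hc.
Qed.

Definition E (s : Defs.C) : A := add e (opp (scal s x)).

Lemma inB_E s : inB (E s).
Proof. apply inB_sub. apply inB_e. apply inB_scal, inB_x. Qed.

Lemma E_nz s : E s <> zero.
Proof.
  intro H. apply sub_eq0 in H. destruct (classic (s = Defs.C0)) as [->|Hs].
  - rewrite scal_C0 in H. auto.
  - apply (Hnot (Cinv' s)). rewrite H, scal_assoc, Cinv'_l, scal_one; auto.
Qed.

Definition F (s : Defs.C) : A := Inv (E s).

Lemma F_spec s : inB (F s) /\ mul (F s) (E s) = e /\ mul (E s) (F s) = e.
Proof. apply Inv_spec. apply inB_E. apply E_nz. Qed.

Definition h (m : nat) (s : Defs.C) : A := Inv (add e (opp (pe (scal s x) (2 ^ m)%nat))).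

Lemma h_avg m s : h m s = avg m (fun i => F (Cmul (rho m i) s)).
Proof.
  unfold h. rewrite <- AV. unfold F, E. f_equal. apply functional_extensionality. intro i.
  rewrite scal_assoc; auto.
  apply inB_scal, inB_x.
  intro c. rewrite scal_assoc. apply E_nz.
Qed.

Lemma F_inB s : inB (F s). Proof. apply F_spec. Qed.

Lemma resolvent s s' : add (F s) (opp (F s')) = scal (Csub s s') (mul (F s) (mul x (F s'))).
Proof.
  destruct (F_spec s) as [[Fs1 Fs2] [Fs3 Fs4]]. destruct (F_spec s') as [[Fs1' Fs2'] [Fs3' Fs4']].
  assert (E1 : F s = mul (F s) (mul (E s') (F s'))) by (rewrite Fs4'; auto).
  assert (E2 : F s' = mul (mul (F s) (E s)) (F s')) by (rewrite Fs3; auto).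
  transitivity (add (mul (F s) (mul (E s') (F s'))) (opp (mul (mul (F s) (E s)) (F s')))).
  { rewrite <- E1, <- E2. reflexivity. }
  transitivity (mul (F s) (mul (add (E s') (opp (E s))) (F s'))). ncring.
  replace (add (E s') (opp (E s))) with (scal (Csub s s') x).
  rewrite mul_scal_l, mul_scal_r; auto.
  unfold E. rewrite <- scal_sub. ncring.
Qed.

Lemma resolvent_norm s s' : norm (add (F s) (opp (F s'))) <= Cabs (Csub s s') * (norm (F s) * (norm x * norm (F s'))).
Proof.
  rewrite resolvent, norm_scal. apply Rmult_le_compat_l. apply Cabs_nonneg.
  eapply Rle_trans. apply norm_mul. apply Rmult_le_compat_l. apply norm_nonneg. apply norm_mul.
Qed.

Lemma local_bound s s' : Cabs (Csub s s') * norm x * norm (F s) <= 1/2 -> norm (F s') <= 2 * norm (F s).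
Proof.
  intro H. pose proof (resolvent_norm s s') as R.
  pose proof (norm_triangle (F s) (opp (add (F s) (opp (F s'))))) as T.
  replace (add (F s) (opp (add (F s) (opp (F s'))))) with (F s') in T by ncring.
  rewrite norm_opp in T. pose proof (norm_nonneg A (F s')). pose proof (norm_nonneg A (F s)).
  pose proof (Cabs_nonneg (Csub s s')). pose proof (norm_nonneg A x). nra.
Qed.

Lemma uniform_bound T : 0 < T -> exists K0, 0 < K0 /\
  forall s, Rabs (fst s) <= T -> Rabs (snd s) <= T -> norm (F s) <= K0.
Proof.
  intro HT. set (X := norm x). assert (HX : 0 <= X) by apply norm_nonneg.
  assert (Hdp : forall u v, 0 < / (4 * (X + 1) * (norm (F (u, v)) + 1))).
  { intros. apply Rinv_0_lt_compat. pose proof (norm_nonneg A (F (u, v))). nra. }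
  destruct (Coquelicot.Compactness.compactness_value_2d (-T) T (-T) T (fun u v => mkposreal _ (Hdp u v))) as [d Hd].
  exists (/ (2 * d * (X + 1))). split.
  { apply Rinv_0_lt_compat. pose proof (cond_pos d). nra. }
  intros [a b] Ha Hb. simpl in Ha, Hb.
  apply NNPP. intro Hneg. apply (Hd a b).
  { unfold Rabs in Ha; destruct Rcase_abs in Ha; split; lra. }
  { unfold Rabs in Hb; destruct Rcase_abs in Hb; split; lra. }
  intros [u [v [_ [_ [Hu [Hv Hdl]]]]]]. simpl in Hu, Hv, Hdl. apply Hneg.
  set (N := norm (F (u, v))) in *. assert (HN : 0 <= N) by apply norm_nonneg.
  set (dl := / (4 * (X + 1) * (N + 1))) in *.
  assert (Hdl_pos : 0 < dl) by apply Hdp. pose proof (cond_pos d) as Hd0.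
  assert (Hc : Cabs (Csub (u, v) (a, b)) <= 2 * dl).
  { eapply Rle_trans. apply Cabs_le_sum. simpl. rewrite <- (Rabs_Ropp (u - a)), <- (Rabs_Ropp (v - b)).
    replace (- (u - a)) with (a - u) by ring. replace (- (v - b)) with (b - v) by ring. lra. }
  assert (Hloc : Cabs (Csub (u, v) (a, b)) * X * N <= 1/2).
  { assert (E : 2 * dl * X * N * (4 * (X + 1) * (N + 1)) = 2 * X * N) by (unfold dl; field; nra).
    assert (2 * dl * X * N <= 1/2).
    { assert (0 < 4 * (X + 1) * (N + 1)) by nra. apply Rmult_le_reg_r with (4 * (X + 1) * (N + 1)); auto.
      rewrite E. nra. }
    pose proof (Cabs_nonneg (Csub (u, v) (a, b))).
    apply Rle_trans with (2 * dl * X * N); auto. apply Rmult_le_compat_r; auto. apply Rmult_le_compat_r; auto. }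
  pose proof (local_bound (u, v) (a, b) Hloc) as Hl. fold N in Hl.
  apply Rle_trans with (2 * N); auto.
  assert (N + 1 <= / (4 * d * (X + 1))).
  { assert (d * (4 * (X + 1) * (N + 1)) <= 1).
    { apply Rle_trans with (dl * (4 * (X + 1) * (N + 1))). apply Rmult_le_compat_r; auto. nra.
      unfold dl. rewrite Rinv_l. lra. nra. }
    apply Rmult_le_reg_l with (4 * d * (X + 1)). nra. rewrite Rinv_r by nra. nra. }
  replace (/ (2 * d * (X + 1))) with (2 * / (4 * d * (X + 1))) by (field; nra). lra.
Qed.

Lemma vsum_norm (g : nat -> A) n B : (forall i, (i < n)%nat -> norm (g i) <= B) -> norm (vsum A g n) <= INR n * B.
Proof.
  induction n; intro H.
  - simpl. rewrite norm_zero. lra.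
  - simpl vsum. eapply Rle_trans. apply norm_triangle. rewrite S_INR.
    pose proof (IHn (fun i Hi => H i (Nat.lt_lt_succ_r _ _ Hi))). pose proof (H n (Nat.lt_succ_diag_r n)). lra.
Qed.

Lemma avg_norm m g B : (forall i, (i < 2 ^ m)%nat -> norm (g i) <= B) -> norm (avg m g) <= B.
Proof.
  intro H. unfold avg. rewrite norm_scal, Cabs_real.
  pose proof (vsum_norm g (2 ^ m) B H) as V. rewrite pow_INR in V. replace (INR 2) with 2 in V by (simpl; ring).
  assert (Hp : 0 < 2 ^ m) by (apply pow_lt; lra).
  rewrite Rabs_right by (left; apply Rinv_0_lt_compat; auto).
  apply Rmult_le_reg_l with (2 ^ m); auto. rewrite <- Rmult_assoc, Rinv_r by lra. lra.
Qed.

Lemma vsum_opp (g : nat -> A) n : opp (vsum A g n) = vsum A (fun i => opp (g i)) n.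
Proof. induction n; simpl. apply opp_zero. rewrite opp_add, IHn; auto. Qed.

Lemma avg_sub m g g' : add (avg m g) (opp (avg m g')) = avg m (fun i => add (g i) (opp (g' i))).
Proof.
  unfold avg. rewrite <- scal_opp, <- scal_add_vec, vsum_opp, <- vsum_add. reflexivity.
Qed.

Lemma Cabs_rho_mul m i s : Cabs (Cmul (rho m i) s) = Cabs s.
Proof. rewrite Cabs_mul, rho_abs. ring. Qed.

Lemma hyp_sq y : inB y -> (forall c, add e (opp (scal c y)) <> zero) ->
  forall c, add e (opp (scal c (mul y y))) <> zero.
Proof.
  intros Hy Hc c. rewrite scal_sq_mul. apply (pair_nz (scal (sq c) y)). apply inB_scal; auto. apply Hc.
  rewrite <- (opp_opp A (scal (sq c) y)), <- opp_via_m1. apply Hc.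
Qed.

Lemma pe_nz m : forall y, inB y -> (forall c, add e (opp (scal c y)) <> zero) -> add e (opp (pe y (2 ^ m)%nat)) <> zero.
Proof.
  induction m; intros y Hy Hc.
  - simpl. rewrite (proj2 Hy). rewrite <- (scal_one y). apply Hc.
  - rewrite Nat.pow_succ_r', <- pe_sq by auto. apply IHm. apply inB_mul; auto. apply hyp_sq; auto.
Qed.

Lemma hx_hyp s : forall c, add e (opp (scal c (scal s x))) <> zero.
Proof. intro c. rewrite scal_assoc. apply E_nz. Qed.

Lemma h_rel m s : scal (2, 0) (h (S m) s) = add (h m s) (h m (Cmul (om m) s)) /\
                  h (S m) s = mul (h m s) (h m (Cmul (om m) s)).
Proof.
  set (Y := pe (scal s x) (2 ^ m)%nat).
  assert (HY : inB Y) by (apply inB_pe, inB_scal, inB_x).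
  assert (E1 : pe (scal s x) (2 ^ S m)%nat = mul Y Y).
  { rewrite Nat.pow_succ_r'. replace (2 * 2 ^ m)%nat with (2 ^ m + 2 ^ m)%nat by lia. apply pe_add. apply inB_scal, inB_x. }
  assert (E2 : pe (scal (Cmul (om m) s) x) (2 ^ m)%nat = opp Y).
  { rewrite <- scal_assoc, pe_scal, om_pow, scal_m1. reflexivity. }
  assert (N1 : add e (opp Y) <> zero) by (apply pe_nz; [apply inB_scal, inB_x|apply hx_hyp]).
  assert (N2 : add e Y <> zero).
  { rewrite <- (opp_opp A Y), <- E2. apply pe_nz; [apply inB_scal, inB_x|apply hx_hyp]. }
  unfold h. rewrite E1, E2, opp_opp. split.
  - rewrite <- pair_inv_sum; auto.
  - apply pair_inv_prod; auto.
Qed.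

Lemma inB_h m s : inB (h m s).
Proof.
  unfold h. apply Inv_spec. apply inB_sub. apply inB_e. apply inB_pe, inB_scal, inB_x.
  apply pe_nz. apply inB_scal, inB_x. apply hx_hyp.
Qed.

Section Bounds.
Variable T : R.
Hypothesis HT : 0 < T.
Variable K0 : R.
Hypothesis HK0 : 0 < K0.
Hypothesis HF : forall s, Rabs (fst s) <= T -> Rabs (snd s) <= T -> norm (F s) <= K0.

Lemma F_bound s : Cabs s <= T -> norm (F s) <= K0.
Proof. intro H. apply HF. eapply Rle_trans; [apply Cabs_fst|auto]. eapply Rle_trans; [apply Cabs_snd|auto]. Qed.

Definition D := K0 * (norm x * K0).

Lemma D_nonneg : 0 <= D.
Proof. unfold D. pose proof (norm_nonneg A x). apply Rmult_le_pos; [lra|]. apply Rmult_le_pos; lra. Qed.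

Lemma F_lip s s' : Cabs s <= T -> Cabs s' <= T -> norm (add (F s) (opp (F s'))) <= D * Cabs (Csub s s').
Proof.
  intros H1 H2. eapply Rle_trans. apply resolvent_norm. unfold D.
  pose proof (F_bound s H1). pose proof (F_bound s' H2). pose proof (norm_nonneg A (F s)).
  pose proof (norm_nonneg A (F s')). pose proof (norm_nonneg A x). pose proof (Cabs_nonneg (Csub s s')).
  assert (Hp : norm (F s) * (norm x * norm (F s')) <= K0 * (norm x * K0)).
  { apply Rmult_le_compat; auto. apply Rmult_le_pos; auto. apply Rmult_le_compat_l; auto. }
  rewrite (Rmult_comm (K0 * _)). apply Rmult_le_compat_l; auto.
Qed.

Lemma h_bound m s : Cabs s <= T -> norm (h m s) <= K0.
Proof.
  intro H. rewrite h_avg. apply avg_norm. intros i _. apply F_bound. rewrite Cabs_rho_mul; auto.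
Qed.

Lemma h_lip m s s' : Cabs s <= T -> Cabs s' <= T -> norm (add (h m s) (opp (h m s'))) <= D * Cabs (Csub s s').
Proof.
  intros H1 H2. rewrite !h_avg, avg_sub. apply avg_norm. intros i _.
  eapply Rle_trans. apply F_lip; rewrite Cabs_rho_mul; auto.
  rewrite Cabs_Csub_mul, rho_abs, Rmult_1_l. apply Rle_refl.
Qed.

Lemma Csub_om s m : Cabs (Csub (Cmul (om m) s) s) = Cabs s * Cabs (Csub (om m) Defs.C1).
Proof.
  rewrite <- Cabs_mul. f_equal. destruct s as [a b]. destruct (om m) as [c d].
  unfold Csub, Cmul, Defs.C1; simpl. f_equal; ring.
Qed.

Lemma scal2 (y : A) : scal (2, 0) y = add y y.
Proof.
  replace (2, 0) with (Cadd Defs.C1 Defs.C1) by (unfold Cadd, Defs.C1; simpl; f_equal; ring).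
  rewrite scal_add_scal, scal_one; auto.
Qed.

Lemma half_twice (y : A) : scal (/ 2, 0) (scal (2, 0) y) = y.
Proof.
  rewrite scal_assoc. replace (Cmul (/ 2, 0) (2, 0)) with Defs.C1. apply scal_one.
  unfold Cmul, Defs.C1; simpl. f_equal; field.
Qed.

Lemma h_step m s : Cabs s <= T -> norm (add (h (S m) s) (opp (h m s))) <= D * T * (3/4) ^ m.
Proof.
  intro Hs. destruct (h_rel m s) as [R1 _].
  assert (E : add (h (S m) s) (opp (h m s)) = scal (/ 2, 0) (add (h m (Cmul (om m) s)) (opp (h m s)))).
  { rewrite <- (half_twice (add (h (S m) s) (opp (h m s)))). f_equal.
    rewrite scal_add_vec, R1, scal_opp, scal2. ncring. }
  rewrite E, norm_scal, Cabs_real, Rabs_right by lra.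
  assert (Hom : Cabs (Cmul (om m) s) <= T) by (rewrite Cabs_mul, om_abs, Rmult_1_l; auto).
  pose proof (h_lip m (Cmul (om m) s) s Hom Hs) as Hl. rewrite Csub_om in Hl.
  pose proof (om_close m). pose proof (Cabs_nonneg s). pose proof (Cabs_nonneg (Csub (om m) Defs.C1)).
  pose proof D_nonneg. assert (0 <= (3/4)^m) by (apply pow_le; lra).
  assert (Cabs s * Cabs (Csub (om m) Defs.C1) <= T * (2 * (3/4)^m)) by (apply Rmult_le_compat; auto).
  assert (D * (Cabs s * Cabs (Csub (om m) Defs.C1)) <= D * (T * (2 * (3/4)^m))) by (apply Rmult_le_compat_l; auto).
  lra.
Qed.

Lemma h_tele m k s : Cabs s <= T -> norm (add (h (m + k) s) (opp (h m s))) <= 4 * D * T * (3/4) ^ m * (1 - (3/4) ^ k).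
Proof.
  intro Hs. induction k.
  - rewrite Nat.add_0_r, add_opp, norm_zero. simpl. lra.
  - rewrite Nat.add_succ_r.
    replace (add (h (S (m + k)) s) (opp (h m s))) with
      (add (add (h (S (m + k)) s) (opp (h (m + k) s))) (add (h (m + k) s) (opp (h m s)))) by ncring.
    eapply Rle_trans. apply norm_triangle.
    pose proof (h_step (m + k) s Hs). rewrite pow_add in H. simpl pow.
    pose proof D_nonneg. assert (0 <= (3/4)^m) by (apply pow_le; lra). assert (0 <= (3/4)^k) by (apply pow_le; lra).
    assert (0 <= D * T * (3/4)^m) by (apply Rmult_le_pos; [apply Rmult_le_pos|]; lra).
    nra.
Qed.

Lemma h_tele' m k s : Cabs s <= T -> norm (add (h (m + k) s) (opp (h m s))) <= 4 * D * T * (3/4) ^ m.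
Proof.
  intro Hs. eapply Rle_trans. apply h_tele; auto.
  pose proof D_nonneg. assert (0 <= (3/4)^m) by (apply pow_le; lra). assert (0 <= (3/4)^k) by (apply pow_le; lra).
  assert (0 <= D * T * (3/4)^m) by (apply Rmult_le_pos; [apply Rmult_le_pos|]; lra).
  nra.
Qed.

Lemma pow34_small d : 0 < d -> exists N, forall n, (n >= N)%nat -> (3/4) ^ n < d.
Proof.
  intro Hd. destruct (pow_lt_1_zero (3/4)) with d as [N HN]; auto.
  rewrite Rabs_right; lra. exists N. intros n Hn. specialize (HN n Hn).
  rewrite Rabs_right in HN; auto. apply Rle_ge, pow_le. lra.
Qed.

Lemma eps_choose d : 0 < d -> exists m, 4 * D * T * (3/4) ^ m <= d.
Proof.
  intro Hd. pose proof D_nonneg. destruct (pow34_small (d / (4 * D * T + 1))) as [N HN].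
  apply Rdiv_lt_0_compat; nra. exists N. specialize (HN N (le_n N)).
  assert (0 <= 4 * D * T) by nra. assert (0 <= (3/4)^N) by (apply pow_le; lra).
  apply Rmult_lt_compat_l with (r := 4 * D * T + 1) in HN; [|lra].
  unfold Rdiv in HN. rewrite (Rmult_comm d), <- Rmult_assoc, Rinv_r, Rmult_1_l in HN by lra. nra.
Qed.

Lemma h_cauchy s : Cabs s <= T -> forall eps, eps > 0 -> exists N, forall p q, (p >= N)%nat -> (q >= N)%nat ->
  norm (add (h p s) (opp (h q s))) < eps.
Proof.
  intros Hs eps Heps. destruct (eps_choose (eps / 4)) as [N HN]. lra.
  exists N. intros p q Hp Hq.
  replace p with (N + (p - N))%nat by lia. replace q with (N + (q - N))%nat by lia.
  replace (add (h (N + (p - N)) s) (opp (h (N + (q - N)) s))) with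
    (add (add (h (N + (p - N)) s) (opp (h N s))) (add (h N s) (opp (h (N + (q - N)) s)))) by ncring.
  eapply Rle_lt_trans. apply norm_triangle. rewrite (norm_sub_sym A (h N s)).
  pose proof (h_tele' N (p - N) s Hs). pose proof (h_tele' N (q - N) s Hs). lra.
Qed.

Lemma L_ex s : exists l, Cabs s <= T -> Un_cv (fun n => norm (add (h n s) (opp l))) 0.
Proof.
  destruct (classic (Cabs s <= T)) as [Hs|Hs].
  - destruct (complete (fun n => h n s) (h_cauchy s Hs)) as [l Hl]. exists l; auto.
  - exists zero. intro; contradiction.
Qed.

Definition L s := proj1_sig (constructive_indefinite_description _ (L_ex s)).

Lemma L_spec s : Cabs s <= T -> Un_cv (fun n => norm (add (h n s) (opp (L s)))) 0.
Proof. unfold L. destruct (constructive_indefinite_description _ (L_ex s)); auto. Qed.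

Lemma L_close s m : Cabs s <= T -> norm (add (h m s) (opp (L s))) <= 4 * D * T * (3/4) ^ m.
Proof.
  intro Hs. apply le_epsilon. intros eps Heps.
  destruct (L_spec s Hs eps Heps) as [N HN]. specialize (HN (m + N)%nat ltac:(lia)).
  unfold R_dist in HN. rewrite Rminus_0_r, Rabs_right in HN by (apply Rle_ge, norm_nonneg).
  replace (add (h m s) (opp (L s))) with (add (add (h m s) (opp (h (m + N) s))) (add (h (m + N) s) (opp (L s)))) by ncring.
  eapply Rle_trans. apply norm_triangle. rewrite (norm_sub_sym A (h m s)).
  pose proof (h_tele' m N s Hs). lra.
Qed.

Lemma small_zero (z : A) C : (forall m, norm z <= C * (3/4) ^ m) -> z = zero.
Proof.
  intro H. apply norm_eq0. apply Rle_antisym; [|apply norm_nonneg].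
  apply le_epsilon. intros eps Heps. rewrite Rplus_0_l.
  destruct (pow34_small (eps / (Rabs C + 1))) as [N HN]. apply Rdiv_lt_0_compat; auto. pose proof (Rabs_pos C); lra.
  specialize (HN N (le_n N)). specialize (H N).
  assert (0 <= (3/4)^N) by (apply pow_le; lra). pose proof (Rabs_pos C).
  assert (C * (3/4)^N <= Rabs C * (3/4)^N) by (apply Rmult_le_compat_r; auto; apply Rle_abs).
  apply Rmult_lt_compat_l with (r := Rabs C + 1) in HN; [|lra].
  unfold Rdiv in HN. rewrite (Rmult_comm eps), <- Rmult_assoc, Rinv_r, Rmult_1_l in HN by lra. nra.
Qed.

Lemma L_inB s : Cabs s <= T -> inB (L s).
Proof.
  intro Hs. pose proof (norm_nonneg A e) as Hne. split.
  - apply sub_eq0. apply (small_zero _ ((norm e + 1) * (4 * D * T))). intro m.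
    pose proof (L_close s m Hs) as Hc. pose proof (proj1 (inB_h m s)) as He.
    replace (add (mul e (L s)) (opp (L s))) with
      (add (opp (mul e (add (h m s) (opp (L s))))) (add (mul e (h m s)) (opp (L s)))) by ncring.
    rewrite He. eapply Rle_trans. apply norm_triangle. rewrite norm_opp.
    eapply Rle_trans. apply Rplus_le_compat_r. apply norm_mul.
    pose proof (norm_nonneg A (add (h m s) (opp (L s)))).
    assert (norm e * norm (add (h m s) (opp (L s))) <= norm e * (4 * D * T * (3 / 4) ^ m)) by (apply Rmult_le_compat_l; auto).
    lra.
  - apply sub_eq0. apply (small_zero _ ((norm e + 1) * (4 * D * T))). intro m.
    pose proof (L_close s m Hs) as Hc. pose proof (proj2 (inB_h m s)) as He.
    replace (add (mul (L s) e) (opp (L s))) with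
      (add (opp (mul (add (h m s) (opp (L s))) e)) (add (mul (h m s) e) (opp (L s)))) by ncring.
    rewrite He. eapply Rle_trans. apply norm_triangle. rewrite norm_opp.
    eapply Rle_trans. apply Rplus_le_compat_r. apply norm_mul.
    pose proof (norm_nonneg A (add (h m s) (opp (L s)))).
    assert (norm (add (h m s) (opp (L s))) * norm e <= (4 * D * T * (3 / 4) ^ m) * norm e) by (apply Rmult_le_compat_r; auto).
    lra.
Qed.

Lemma L_bound s : Cabs s <= T -> norm (L s) <= K0 + 4 * D * T.
Proof.
  intro Hs. pose proof (L_close s 0 Hs) as H0. pose proof (h_bound 0 s Hs) as H1. simpl in H0.
  replace (L s) with (add (h 0 s) (opp (add (h 0 s) (opp (L s))))) by ncring.
  eapply Rle_trans. apply norm_triangle. rewrite norm_opp. lra.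
Qed.

Lemma L_idem s : Cabs s <= T -> mul (L s) (L s) = L s.
Proof.
  intro Hs. apply sub_eq0.
  pose proof D_nonneg as HD.
  apply (small_zero _ (4 * D * T * (K0 + 4 * D * T + 3 * K0 + 1))). intro m.
  set (a := h m s). set (b := h (S m) s). set (l := L s).
  destruct (h_rel m s) as [R1 R2]. fold a b in R1, R2.
  set (qv := h m (Cmul (om m) s)) in *.
  assert (Hq : qv = add (add b b) (opp a)) by (rewrite <- scal2, R1; ncring).
  assert (Rel : b = add (add (mul a b) (mul a b)) (opp (mul a a))).
  { rewrite R2 at 1. rewrite Hq. ncring. }
  assert (E0 : add (mul l l) (opp l) =
    add (add (add (add (add (mul (add l (opp a)) l) (mul a (add l (opp b)))) (mul a (add l (opp b))))
      (mul a (add a (opp l)))) (add b (opp l)))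
      (add (add (add (mul a b) (mul a b)) (opp (mul a a))) (opp b))) by ncring.
  rewrite <- Rel, add_opp, add_zero in E0. rewrite E0.
  pose proof (L_close s m Hs) as Ca. pose proof (L_close s (S m) Hs) as Cb. fold a b l in Ca, Cb.
  pose proof (h_bound m s Hs) as Ba. fold a in Ba. pose proof (L_bound s Hs) as Bl. fold l in Bl.
  set (ep := 4 * D * T * (3/4) ^ m) in *.
  assert (HDT : 0 <= 4 * D * T) by nra. assert (Hqm : 0 <= (3/4) ^ m) by (apply pow_le; lra).
  assert (Hep : 0 <= ep) by (unfold ep; apply Rmult_le_pos; auto).
  assert (Cb' : norm (add b (opp l)) <= ep).
  { eapply Rle_trans. apply Cb. unfold ep. simpl. nra. }
  assert (N1 : norm (add l (opp a)) <= ep) by (rewrite norm_sub_sym; auto).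
  assert (N2 : norm (add l (opp b)) <= ep) by (rewrite norm_sub_sym; auto).
  pose proof (norm_nonneg A a). pose proof (norm_nonneg A l).
  pose proof (norm_nonneg A (add l (opp a))). pose proof (norm_nonneg A (add l (opp b))).
  pose proof (norm_nonneg A (add a (opp l))).
  assert (T1 : norm (mul (add l (opp a)) l) <= ep * (K0 + 4 * D * T)).
  { eapply Rle_trans. apply norm_mul. apply Rmult_le_compat; auto. }
  assert (T2 : norm (mul a (add l (opp b))) <= K0 * ep).
  { eapply Rle_trans. apply norm_mul. apply Rmult_le_compat; auto. }
  assert (T3 : norm (mul a (add a (opp l))) <= K0 * ep).
  { eapply Rle_trans. apply norm_mul. apply Rmult_le_compat; auto. }
  eapply Rle_trans. apply norm_triangle. eapply Rle_trans. apply Rplus_le_compat_r. apply norm_triangle.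
  eapply Rle_trans. apply Rplus_le_compat_r. apply Rplus_le_compat_r. apply norm_triangle.
  eapply Rle_trans. apply Rplus_le_compat_r. apply Rplus_le_compat_r. apply Rplus_le_compat_r. apply norm_triangle.
  unfold ep in *. nra.
Qed.

Lemma L_01 s : Cabs s <= T -> L s = zero \/ L s = e.
Proof.
  intro Hs. destruct (classic (L s = zero)) as [H|H]; [left; auto|right].
  pose proof (L_inB s Hs) as HB. destruct (Inv_spec (L s) HB H) as [HI [H1 H2]].
  rewrite <- (proj1 HB), <- H1, <- mul_assoc, L_idem; auto.
Qed.

Lemma L_lip s s' : Cabs s <= T -> Cabs s' <= T -> norm (add (L s) (opp (L s'))) <= D * Cabs (Csub s s').
Proof.
  intros Hs Hs'. apply le_epsilon. intros eps Heps.
  destruct (eps_choose (eps / 2)) as [m Hm]. lra.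
  replace (add (L s) (opp (L s'))) with
    (add (opp (add (h m s) (opp (L s)))) (add (add (h m s) (opp (h m s'))) (add (h m s') (opp (L s'))))) by ncring.
  eapply Rle_trans. apply norm_triangle. rewrite norm_opp.
  eapply Rle_trans. apply Rplus_le_compat_l. apply norm_triangle.
  pose proof (L_close s m Hs). pose proof (L_close s' m Hs'). pose proof (h_lip m s s' Hs Hs'). lra.
Qed.

Lemma h_0 m : h m Defs.C0 = e.
Proof.
  unfold h. rewrite pe_scal.
  replace (Coquelicot.Complex.Cpow Defs.C0 (2 ^ m)) with Defs.C0.
  rewrite scal_C0, opp_zero, add_zero. apply Inv_e.
  destruct (2 ^ m)%nat eqn:E. exfalso. apply (Nat.pow_nonzero 2 m); lia.
  simpl. unfold Coquelicot.Complex.Cmult, Defs.C0; simpl. f_equal; ring.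
Qed.

Lemma Cabs_C0 : Cabs Defs.C0 = 0.
Proof. unfold Cabs, Defs.C0; simpl. replace (0 * 0 + 0 * 0) with 0 by ring. apply sqrt_0. Qed.

Lemma L_0 : L Defs.C0 = e.
Proof.
  assert (Hs : Cabs Defs.C0 <= T) by (rewrite Cabs_C0; lra).
  symmetry. apply sub_eq0. apply (small_zero _ (4 * D * T)). intro m.
  rewrite <- (h_0 m). apply L_close; auto.
Qed.

Lemma pe_succ_r y n : inB y -> pe y (S n) = mul (pe y n) y.
Proof.
  intro Hy. induction n.
  - simpl. rewrite (proj1 Hy), (proj2 Hy); auto.
  - change (pe y (S (S n))) with (mul y (pe y (S n))). rewrite IHn at 1. simpl. apply mul_assoc.
Qed.

Lemma half_pow_mono a b : (a <= b)%nat -> (1/2) ^ b <= (1/2) ^ a.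
Proof.
  intro H. replace b with (a + (b - a))%nat by lia. rewrite pow_add.
  assert (0 <= (1/2)^a) by (apply pow_le; lra). assert ((1/2)^(b - a) <= 1) by (apply Rle_trans with (1 ^ (b - a)); [apply pow_incr; lra | rewrite pow1; lra]).
  nra.
Qed.

Lemma two_pow_ge m : (S m <= 2 ^ m)%nat.
Proof. induction m; simpl; lia. Qed.

Hypothesis HTx : 2 * norm (Inv x) <= T.

Lemma h_far m : norm (h m (T, 0)) <= norm e * (1/2) ^ m.
Proof.
  assert (Hx0 : x <> zero).
  { intro E0. apply (Hnot Defs.C0). rewrite scal_C0; auto. }
  destruct (Inv_spec x inB_x Hx0) as [Hxi [Hxix Hxxi]]. set (xi := Inv x) in *.
  assert (Hpinv : forall n, mul (pe x n) (pe xi n) = e).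
  { induction n. simpl; auto. rewrite (pe_succ_r xi n Hxi). simpl.
    transitivity (mul (mul x (mul (pe x n) (pe xi n))) xi). ncring. rewrite IHn, Hxe; auto. }
  set (N := (2 ^ m)%nat). assert (HN : (S m <= N)%nat) by apply two_pow_ge.
  set (sN := Coquelicot.Complex.Cpow (T, 0) N).
  assert (HsN : Cabs sN = T ^ N).
  { unfold sN. rewrite Cabs_Cmod, Coquelicot.Complex.Cmod_pow, <- Cabs_Cmod, Cabs_real, Rabs_right; auto; lra. }
  assert (HTN : 0 < T ^ N) by (apply pow_lt; auto).
  assert (HsN0 : sN <> Defs.C0) by (intro E0; rewrite E0, Cabs_C0 in HsN; lra).
  set (X := pe x N). set (Xi := pe xi N).
  set (W := h m (T, 0)).
  assert (HW : W = Inv (add e (opp (scal sN X)))) by (unfold W, h; rewrite pe_scal; auto).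
  assert (HEB : inB (add e (opp (scal sN X)))) by (apply inB_sub; [apply inB_e|apply inB_scal, inB_pe, inB_x]).
  assert (HE0 : add e (opp (scal sN X)) <> zero).
  { unfold sN, X. rewrite <- pe_scal. apply pe_nz. apply inB_scal, inB_x. apply hx_hyp. }
  destruct (Inv_spec _ HEB HE0) as [HWB [HW2 _]]. rewrite <- HW in HWB, HW2.
  assert (HS : scal sN (mul W X) = add W (opp e)).
  { rewrite mul_sub_r, (proj2 HWB), mul_scal_r in HW2. rewrite <- HW2. ncring. }
  assert (HW3 : W = scal (Cinv' sN) (mul (add W (opp e)) Xi)).
  { rewrite <- HS, mul_scal_l, scal_assoc, Cinv'_l, scal_one; auto.
    rewrite <- mul_assoc. unfold X, Xi. rewrite Hpinv. symmetry; apply (proj2 HWB). }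
  assert (HCi : Cabs (Cinv' sN) = / T ^ N).
  { unfold Cinv'. rewrite Cabs_Cmod, Coquelicot.Complex.Cmod_inv, <- Cabs_Cmod, HsN; auto. }
  assert (HXi : norm Xi <= norm xi ^ N).
  { unfold Xi. destruct N as [|k]. lia. apply pe_norm; auto. }
  assert (Hr : norm xi ^ N <= T ^ N * (1/2) ^ N).
  { rewrite <- Rpow_mult_distr. apply pow_incr. split. apply norm_nonneg. lra. }
  assert (Hhalf : (1/2) ^ N <= (1/2) ^ (S m)).
  { apply half_pow_mono; auto. }
  assert (Hr2 : (1/2) ^ (S m) = 1/2 * (1/2) ^ m) by (simpl; ring).
  assert (Hm0 : 0 <= (1/2) ^ m) by (apply pow_le; lra).
  assert (Hm1 : (1/2) ^ m <= 1) by (apply Rle_trans with (1 ^ m); [apply pow_incr; lra | rewrite pow1; lra]).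
  set (r := (1/2) ^ N) in *. assert (Hr0 : 0 <= r) by (apply pow_le; lra).
  pose proof (norm_nonneg A W) as HWn. pose proof (norm_nonneg A e) as Hen.
  assert (HWle : norm W <= (norm W + norm e) * r).
  { rewrite HW3 at 1. rewrite norm_scal, HCi.
    eapply Rle_trans. apply Rmult_le_compat_l. left; apply Rinv_0_lt_compat; auto. apply norm_mul.
    assert (Hwe : norm (add W (opp e)) <= norm W + norm e) by (eapply Rle_trans; [apply norm_triangle|rewrite norm_opp; lra]).
    pose proof (norm_nonneg A (add W (opp e))). pose proof (norm_nonneg A Xi).
    assert (norm (add W (opp e)) * norm Xi <= (norm W + norm e) * (T ^ N * r)).
    { apply Rmult_le_compat; auto. lra. }
    apply Rle_trans with (/ T ^ N * ((norm W + norm e) * (T ^ N * r))).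
    apply Rmult_le_compat_l; auto. left; apply Rinv_0_lt_compat; auto.
    right. field. lra. }
  assert (r <= 1/2) by nra.
  assert (norm W * (1 - r) <= norm e * r) by nra.
  assert (norm W <= 2 * norm e * r) by nra.
  unfold W in *. nra.
Qed.

Lemma Rmin_step a d : 0 <= a -> 0 <= d -> Rabs (Rmin (a + d) T - Rmin a T) <= d.
Proof. intros. unfold Rmin. destruct (Rle_dec (a + d) T), (Rle_dec a T); unfold Rabs; destruct Rcase_abs; lra. Qed.

Lemma Rmin_range a : 0 <= a -> 0 <= Rmin a T <= T.
Proof. intros. unfold Rmin. destruct (Rle_dec a T); lra. Qed.

Lemma GM_false : False.
Proof.
  assert (Hne : 0 < norm e) by (apply norm_pos; auto).
  pose proof D_nonneg as HD.
  assert (HsT : forall t, 0 <= t <= T -> Cabs (t, 0) <= T).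
  { intros t Ht. rewrite Cabs_real, Rabs_right; lra. }
  assert (LT : L (T, 0) = zero).
  { destruct (L_01 (T, 0) (HsT T ltac:(lra))) as [H|H]; auto. exfalso.
    assert (HDT : 0 <= 4 * D * T) by nra.
    destruct (pow34_small (norm e / (norm e + 4 * D * T))) as [m Hm]. apply Rdiv_lt_0_compat; lra.
    specialize (Hm m (le_n m)).
    pose proof (h_far m) as Hf. pose proof (L_close (T, 0) m (HsT T ltac:(lra))) as Hc.
    assert (Hp : (1/2) ^ m <= (3/4) ^ m) by (apply pow_incr; lra).
    assert (Hq : 0 <= (3/4) ^ m) by (apply pow_le; lra).
    assert (HLe : norm (L (T, 0)) <= norm (h m (T, 0)) + norm (add (h m (T, 0)) (opp (L (T, 0))))).
    { replace (L (T, 0)) with (add (h m (T, 0)) (opp (add (h m (T, 0)) (opp (L (T, 0)))))) at 1 by ncring.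
      eapply Rle_trans. apply norm_triangle. rewrite norm_opp. lra. }
    rewrite H in HLe, Hc.
    assert ((norm e + 4 * D * T) * (3/4) ^ m < norm e).
    { apply Rmult_lt_compat_l with (r := norm e + 4 * D * T) in Hm; [|lra].
      unfold Rdiv in Hm. rewrite (Rmult_comm (norm e)), <- Rmult_assoc, Rinv_r, Rmult_1_l in Hm by lra. lra. }
    assert (norm e * (1/2)^m <= norm e * (3/4)^m) by (apply Rmult_le_compat_l; lra).
    assert ((norm e + 4 * D * T) * (3/4) ^ m = norm e * (3/4)^m + 4 * D * T * (3/4)^m) by ring.
    lra. }
  set (d := norm e / (2 * (D + 1))).
  assert (Hd : 0 < d) by (unfold d; apply Rdiv_lt_0_compat; lra).
  assert (HDd : D * d < norm e).
  { unfold d. apply Rmult_lt_reg_r with (2 * (D + 1)). lra. unfold Rdiv.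
    rewrite Rmult_assoc, (Rmult_assoc (norm e)), Rinv_l, Rmult_1_r by lra. nra. }
  assert (Hk : forall k, L (Rmin (INR k * d) T, 0) = e).
  { induction k.
    - simpl. rewrite Rmult_0_l. unfold Rmin. destruct (Rle_dec 0 T); [|lra]. apply L_0.
    - pose proof (pos_INR k) as Hk0.
      assert (Ha : 0 <= INR k * d) by nra.
      destruct (L_01 (Rmin (INR (S k) * d) T, 0)) as [H|H]; auto.
      + apply HsT. apply Rmin_range. rewrite S_INR. nra.
      + exfalso.
        pose proof (L_lip (Rmin (INR (S k) * d) T, 0) (Rmin (INR k * d) T, 0)) as Hl.
        rewrite H, IHk, add_0l, norm_opp, Cabs_Csub_real in Hl.
        rewrite S_INR, Rmult_plus_distr_r, Rmult_1_l in Hl.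
        pose proof (Rmin_step (INR k * d) d Ha ltac:(lra)).
        assert (norm e <= D * d).
        { eapply Rle_trans. apply Hl. apply HsT, Rmin_range. lra. apply HsT, Rmin_range. lra.
          apply Rmult_le_compat_l; auto. }
        lra. }
  destruct (archimed (T / d)) as [Hup _].
  assert (Hz : (0 < up (T / d))%Z).
  { apply lt_0_IZR. assert (0 < T / d) by (apply Rdiv_lt_0_compat; lra). lra. }
  specialize (Hk (Z.to_nat (up (T / d)))).
  rewrite INR_IZR_INZ, Znat.Z2Nat.id in Hk by lia.
  assert (T < IZR (up (T / d)) * d).
  { apply Rmult_lt_compat_r with (r := d) in Hup; auto. unfold Rdiv in Hup.
    rewrite Rmult_assoc, Rinv_l, Rmult_1_r in Hup by lra. lra. }
  unfold Rmin in Hk. destruct (Rle_dec (IZR (up (T / d)) * d) T); [lra|].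
  rewrite LT in Hk. apply He0. auto.
Qed.

End Bounds.

End GMalg.

Lemma GM_thm (A : CBanachAlgebra) (e b : A) : MI A e -> mul e b = b -> mul b e = b -> exists c, b = scal c e.
Proof.
  intros HMI Heb Hbe.
  destruct (classic (exists c, b = scal c e)) as [H|Hn]; auto. exfalso.
  assert (Hnot : forall c, b <> scal c e) by (intros c E; apply Hn; eauto).
  pose proof HMI as [Hee [He0 _]].
  assert (Hdiv : forall y, mul e y = y -> mul y e = y -> y <> zero ->
    exists c, mul e c = c /\ mul c e = c /\ mul c y = e /\ mul y c = e).
  { intros y H1 H2 H3. apply (MI_div A e y HMI H1 H2 H3). }
  set (T := 2 * norm (Inv A e Hdiv b) + 1).
  assert (HT : 0 < T) by (unfold T; pose proof (norm_nonneg A (Inv A e Hdiv b)); lra).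
  destruct (uniform_bound A e b Hee He0 Hdiv Heb Hbe Hnot T HT) as [K0 [HK0 HF]].
  apply (GM_false A e b Hee He0 Hdiv Heb Hbe Hnot T HT K0 HK0 HF). unfold T; lra.
Qed.

Theorem theorem1p9 (A : CBanachAlgebra) (hA : semisimple A) :
  infinite_dimensional A (soc A) <->
  (forall x : A, soc A x -> topological_divisor_of_zero_in A (soc A) x).
Proof.
  pose proof (semisimple_SP A hA) as hSP. split.
  - intros Hinf x Hx. apply (dir_inf A (GM_thm A) hSP x Hinf Hx).
  - intros H Hfd. destruct (dir_fd A hSP Hfd) as [x [Hx Hn]]. apply Hn, H, Hx.
Qed.
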